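(* Let $\omega>0$, $v(x)=\omega^2x^2/2$ on $\mathbb{Z}$, $\gamma\in(-\infty,-1)$, and $H_N=\frac{N^2}{2}\Delta+N^{-2\gamma}v$ on $\ell^2(\mathbb{Z})$. Then $$\lim_{N\to\infty}\frac{E_0(H_N)}{N^{2|\gamma|}}=0,\qquad \lim_{N\to\infty}\frac{E_{2n}(H_N)}{N^{2|\gamma|}}=\lim_{N\to\infty}\frac{E_{2n-1}(H_N)}{N^{2|\gamma|}}=\frac{\omega^2n^2}{2}\quad(n\ge1).$$
   Context: $(\Delta f)(x)=2f(x)-f(x+1)-f(x-1)$; $v$ acts by multiplication. $E_n(H_N)$ is the $n$-th eigenvalue of $H_N$ counted with multiplicity, $n=0,1,2,\dots$. *)

(* Defs.v *)
From Stdlib Require Import Reals ZArith.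
From Coquelicot Require Import Coquelicot.
Open Scope R_scope.

(* square-summable functions on Z : sum over x >= 0 and x < 0 *)
Definition l2Z (f : Z -> R) : Prop :=
  ex_series (fun k : nat => (f (Z.of_nat k))^2 + (f (- Z.of_nat k - 1)%Z)^2).

Definition Lap (f : Z -> R) (x : Z) : R :=
  2 * f x - f (x + 1)%Z - f (x - 1)%Z.

Definition vpot (om : R) (x : Z) : R := om^2 * (IZR x)^2 / 2.

Definition HN (om gam : R) (N : nat) (f : Z -> R) (x : Z) : R :=
  (INR N)^2 / 2 * Lap f x + Rpower (INR N) (-2 * gam) * vpot om x * f x.

Definition is_eigvec (om gam : R) (N : nat) (mu : R) (f : Z -> R) : Prop :=
  l2Z f /\ (exists x, f x <> 0) /\ forall x, HN om gam N f x = mu * f x.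

Definition lin_indep (m : nat) (F : nat -> Z -> R) : Prop :=
  forall c : nat -> R,
    (forall x, sum_f_R0 (fun i => c i * F i x) m = 0) -> forall i, (i <= m)%nat -> c i = 0.

(* E_n(H_N): n-th eigenvalue counted with multiplicity (n = 0,1,2,...):
   the least λ such that there are n+1 linearly independent eigenvectors
   with eigenvalues ≤ λ. *)
Definition Eig (om gam : R) (N n : nat) : R :=
  real (Glb_Rbar (fun lam => exists (F : nat -> Z -> R) (mu : nat -> R),
     lin_indep n F /\
     forall i, (i <= n)%nat -> is_eigvec om gam N (mu i) (F i) /\ mu i <= lam)).

(* Main.v *)
Require Import Defs.
From Stdlib Require Import Reals ZArith List Lia Lra Classical ClassicalEpsilon.
From Coquelicot Require Import Coquelicot.
Open Scope R_scope.

Lemma geo_small (kap C eps : R) : 0 <= kap < 1 -> 0 < eps -> exists N, C * kap ^ N < eps.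
Proof.
  intros Hk He.
  destruct (pow_lt_1_zero kap ltac:(rewrite Rabs_pos_eq; lra) (eps / (Rabs C + 1)))
    as [N HN].
  { apply Rdiv_lt_0_compat; [lra| pose proof (Rabs_pos C); lra]. }
  exists N. specialize (HN N (Nat.le_refl _)).
  rewrite Rabs_pos_eq in HN by (apply pow_le; lra).
  assert (0 <= kap ^ N) by (apply pow_le; lra).
  assert (C * kap ^ N <= Rabs C * kap ^ N).
  { apply Rmult_le_compat_r; [lra| apply Rle_abs]. }
  assert (Rabs C * kap^N <= (Rabs C + 1) * kap ^ N) by (apply Rmult_le_compat_r; lra).
  assert ((Rabs C + 1) * kap ^ N < eps).
  { pose proof (Rabs_pos C).
    apply (Rmult_lt_compat_l (Rabs C + 1)) in HN; [|lra].
    replace ((Rabs C + 1) * (eps / (Rabs C + 1))) with eps in HN by (field; lra). lra. }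
  lra.
Qed.

Lemma geo_le (x y C kap : R) : 0 <= kap < 1 -> (forall k, x <= y + C * kap ^ k) -> x <= y.
Proof.
  intros Hk H. destruct (Rle_dec x y) as [|Hn]; [auto|].
  destruct (geo_small kap C (x - y) Hk) as [N HN]; [lra|].
  specialize (H N). lra.
Qed.

Lemma geo_zero (d C kap : R) : 0 <= kap < 1 -> (forall k, Rabs d <= C * kap ^ k) -> d = 0.
Proof.
  intros Hk H.
  assert (Rabs d <= 0) by (apply (geo_le _ _ C kap Hk); intros k; specialize (H k); lra).
  pose proof (Rabs_pos d). destruct (Req_dec d 0); auto.
  pose proof (Rabs_pos_lt d H2). lra.
Qed.

Lemma geo_lim (u : nat -> R) (a kap : R) : 0 <= a -> 0 <= kap <= /2 ->
  (forall k, Rabs (u (S k) - u k) <= a * kap ^ k) ->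
  forall k, Rabs (u k - real (Lim_seq u)) <= 2 * a * kap ^ k.
Proof.
  intros Ha Hk H.
  assert (Hc : forall m p, Rabs (u (p + m)%nat - u m) <= 2 * a * (kap ^ m - kap ^ (p + m))).
  { intros m p. induction p as [|p IH].
    - simpl. unfold Rminus. rewrite Rplus_opp_r, Rabs_R0. lra.
    - replace (u (S p + m)%nat - u m) with ((u (S (p + m)) - u (p+m)%nat) + (u (p + m)%nat - u m))
        by (simpl; ring).
      eapply Rle_trans; [apply Rabs_triang|].
      specialize (H (p + m)%nat).
      assert (kap ^ (S p + m) = kap * kap ^ (p + m)) by (simpl; ring).
      rewrite H0.
      assert (0 <= kap ^ (p + m)) by (apply pow_le; lra).
      assert (a * kap ^ (p + m) <= 2 * a * (kap ^ (p+m) - kap * kap ^ (p + m))).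
      { replace (2 * a * (kap ^ (p+m) - kap * kap ^ (p + m))) with
          (a * kap ^ (p+m) * (2 * (1 - kap))) by ring.
        rewrite <- (Rmult_1_r (a * kap ^ (p+m))) at 1.
        apply Rmult_le_compat_l; [apply Rmult_le_pos; lra| lra]. }
      lra. }
  assert (Hc' : forall m n, (m <= n)%nat -> Rabs (u n - u m) <= 2 * a * kap ^ m).
  { intros m n Hmn. replace n with ((n - m) + m)%nat by lia.
    eapply Rle_trans; [apply Hc|].
    assert (0 <= kap ^ (n - m + m)) by (apply pow_le; lra).
    assert (0 <= a) by lra. nra. }
  assert (Hex : ex_finite_lim_seq u).
  { apply ex_lim_seq_cauchy_corr. intros eps.
    destruct (geo_small kap (4 * a) eps ltac:(lra) (cond_pos eps)) as [N HN].
    exists N. intros n m Hn Hm.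
    pose proof (Hc' N n Hn). pose proof (Hc' N m Hm).
    replace (u n - u m) with ((u n - u N) - (u m - u N)) by ring.
    eapply Rle_lt_trans; [apply Rabs_triang|]. rewrite Rabs_Ropp. lra. }
  pose proof (Lim_seq_correct' u Hex) as Hl.
  destruct Hex as [l Hl0]. rewrite (is_lim_seq_unique u l Hl0) in *. simpl.
  intros k. apply is_lim_seq_spec in Hl0.
  destruct (Rle_dec (Rabs (u k - l)) (2 * a * kap ^ k)) as [|Hn]; auto.
  exfalso.
  assert (Hp : 0 < Rabs (u k - l) - 2 * a * kap ^ k) by lra.
  destruct (Hl0 (mkposreal _ Hp)) as [N HN]. simpl in HN.
  specialize (HN (N + k)%nat ltac:(lia)).
  specialize (Hc' k (N + k)%nat ltac:(lia)).
  replace (u k - l) with (- (u (N + k)%nat - u k) + (u (N + k)%nat - l)) in Hn, HN by ring.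
  pose proof (Rabs_triang (- (u (N + k)%nat - u k)) (u (N + k)%nat - l)).
  rewrite Rabs_Ropp in H0. lra.
Qed.

Lemma sum_zero (f : nat -> R) m : (forall i, (i <= m)%nat -> f i = 0) -> sum_f_R0 f m = 0.
Proof.
  intros H. rewrite (sum_eq f (fun _ => 0)) by auto. rewrite sum_cte. ring.
Qed.

Lemma sum_delta (f : nat -> R) p m : (p <= m)%nat ->
  sum_f_R0 (fun i => if Nat.eqb i p then f i else 0) m = f p.
Proof.
  induction m as [|m IH]; intros Hp.
  - assert (p = 0%nat) by lia. subst. simpl. reflexivity.
  - rewrite tech5. destruct (Nat.eq_dec p (S m)) as [->|Hne].
    + rewrite Nat.eqb_refl. rewrite sum_zero. ring.
      intros i Hi. destruct (Nat.eqb_spec i (S m)); [lia|auto].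
    + rewrite IH by lia. destruct (Nat.eqb_spec (S m) p); [lia|ring].
Qed.

Lemma sum_swap (f : nat -> nat -> R) m K :
  sum_f_R0 (fun i => sum_f_R0 (fun k => f i k) K) m =
  sum_f_R0 (fun k => sum_f_R0 (fun i => f i k) m) K.
Proof.
  induction m as [|m IH].
  - simpl. reflexivity.
  - rewrite tech5. rewrite IH. rewrite <- sum_plus. apply sum_eq. intros; simpl; reflexivity.
Qed.

Lemma lin_alg (m : nat) : forall (L : list nat) (a : nat -> nat -> R),
  (length L <= m)%nat ->
  exists c : nat -> R, (exists i, (i <= m)%nat /\ c i <> 0) /\
    forall k, In k L -> sum_f_R0 (fun i => c i * a i k) m = 0.
Proof.
  induction m as [|m IH]; intros L a HL.
  - destruct L; [|simpl in HL; lia].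
    exists (fun _ => 1). split; [exists 0%nat; split; [lia|lra]|]. intros k [].
  - destruct (classic (exists k, In k L /\ a (S m) k <> 0)) as [[k0 [Hk0 Hp]]|Hno].
    + set (p := a (S m) k0) in *.
      set (b := fun i k => a i k - a (S m) k * a i k0 / p).
      assert (HL' : (length (remove Nat.eq_dec k0 L) <= m)%nat).
      { pose proof (remove_length_lt Nat.eq_dec L k0 Hk0). lia. }
      destruct (IH _ b HL') as [c' [[i0 [Hi0 Hci0]] Hc']].
      set (T := sum_f_R0 (fun i => c' i * a i k0) m).
      exists (fun i => if Nat.eqb i (S m) then - T / p else c' i).
      split.
      * exists i0. split; [lia|]. destruct (Nat.eqb_spec i0 (S m)); [lia|auto].
      * intros k Hk. rewrite tech5.
        rewrite (sum_eq _ (fun i => c' i * a i k)).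
        2:{ intros i Hi. destruct (Nat.eqb_spec i (S m)); [lia|auto]. }
        rewrite Nat.eqb_refl.
        destruct (Nat.eq_dec k k0) as [->|Hne].
        -- fold T. fold p. field. auto.
        -- pose proof (Hc' k (in_in_remove Nat.eq_dec L Hne Hk)) as Hb.
           unfold b in Hb.
           rewrite (sum_eq _ (fun i => c' i * a i k - (a (S m) k / p) * (c' i * a i k0))) in Hb
             by (intros; field; auto).
           rewrite minus_sum in Hb.
           rewrite (sum_eq (fun i => a (S m) k / p * (c' i * a i k0))
                           (fun i => (c' i * a i k0) * (a (S m) k / p))) in Hb by (intros; ring).
           rewrite <- scal_sum in Hb.
           fold T in Hb. fold T.
           replace (- T / p * a (S m) k) with (- (a (S m) k / p * T)) by (field; auto).
           lra.
    + exists (fun i => if Nat.eqb i (S m) then 1 else 0). split.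
      * exists (S m). split; [lia|]. rewrite Nat.eqb_refl. lra.
      * intros k Hk. rewrite tech5. rewrite Nat.eqb_refl. rewrite sum_zero.
        -- assert (a (S m) k = 0) by (apply NNPP; intro; apply Hno; eauto). rewrite H. ring.
        -- intros i Hi. destruct (Nat.eqb_spec i (S m)); [lia|ring].
Qed.

Definition qq (om : R) := om ^ 2 / 2.
Definition Aop (om eps : R) (f : Z -> R) (x : Z) : R := eps * Lap f x + vpot om x * f x.
Definition Vn (om : R) (j : nat) : R := vpot om (Z.of_nat j).
Definition cen (j : nat) (sg : R) (x : Z) : R :=
  if Z.eq_dec x (Z.of_nat j) then 1 else if Z.eq_dec x (- Z.of_nat j) then sg else 0.
Definition iscb (j : nat) (x : Z) : bool := (Z.eqb x (Z.of_nat j) || Z.eqb x (- Z.of_nat j))%bool.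
Definition Bc (j : nat) : R := 2 ^ (j + 2).
Definition wh (x : Z) : R := / 2 ^ (Z.abs_nat x).
Definition PhiL (om eps : R) (j : nat) (sg : R) (h : Z -> R) : R :=
  Vn om j + eps * (2 - (cen j sg (Z.of_nat j + 1) + h (Z.of_nat j + 1)%Z)
                      - (cen j sg (Z.of_nat j - 1) + h (Z.of_nat j - 1)%Z)).
Definition PhiH (om eps : R) (j : nat) (sg : R) (l : R) (h : Z -> R) (x : Z) : R :=
  if iscb j x then 0 else
  eps * ((cen j sg (x + 1) + h (x + 1)%Z) + (cen j sg (x - 1) + h (x - 1)%Z))
    / (vpot om x - l + 2 * eps).
Definition Inv (om : R) (j : nat) (B : R) (w : Z -> R) (l : R) (h : Z -> R) : Prop :=
  Rabs (l - Vn om j) <= qq om / 2 /\ forall x, Rabs (h x) <= B * w x.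

Lemma qq_pos om : 0 < om -> 0 < qq om.
Proof. intros. unfold qq. assert (0 < om^2) by (apply pow_lt; auto). lra. Qed.

Lemma Bc_ge4 j : 4 <= Bc j.
Proof.
  unfold Bc. rewrite pow_add. assert (1 <= 2 ^ j) by (apply pow_R1_Rle; lra).
  simpl. lra.
Qed.

Lemma Bc_mono j n : (j <= n)%nat -> Bc j <= Bc n.
Proof. intros. unfold Bc. apply Rle_pow; [lra|lia]. Qed.

Lemma vpot_opp om x : vpot om (- x) = vpot om x.
Proof. unfold vpot. rewrite opp_IZR. field. Qed.

Lemma vpot_abs om x : vpot om (Z.abs x) = vpot om x.
Proof.
  destruct (Z.abs_spec x) as [[_ ->]|[_ ->]]; [auto| apply vpot_opp].
Qed.

Lemma vpot_nonneg om x : 0 <= vpot om x.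
Proof. unfold vpot. assert (0 <= om^2) by (apply pow2_ge_0). assert (0 <= IZR x ^2) by apply pow2_ge_0.
  apply Rmult_le_pos; [apply Rmult_le_pos; auto| lra]. Qed.

Lemma IZR_abs_ge1 z : z <> 0%Z -> 1 <= Rabs (IZR z).
Proof.
  intros Hz. rewrite <- abs_IZR. apply IZR_le. lia.
Qed.

Lemma vpot_diff om x y : vpot om x - vpot om y = qq om * IZR (x * x - y * y).
Proof. unfold vpot, qq. rewrite minus_IZR, !mult_IZR. field. Qed.

Lemma vpot_gap om j x : 0 < om -> x <> Z.of_nat j -> x <> (- Z.of_nat j)%Z ->
  qq om <= Rabs (vpot om x - Vn om j).
Proof.
  intros Hom H1 H2. unfold Vn. rewrite vpot_diff, Rabs_mult.
  rewrite (Rabs_pos_eq (qq om)) by (pose proof (qq_pos om Hom); lra).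
  assert (x * x - Z.of_nat j * Z.of_nat j <> 0)%Z.
  { intro H. assert ((x - Z.of_nat j) * (x + Z.of_nat j) = 0)%Z by lia.
    apply Z.mul_eq_0 in H0. lia. }
  pose proof (IZR_abs_ge1 _ H). pose proof (qq_pos om Hom). nra.
Qed.

Lemma vpot_lt om x n : 0 < om -> vpot om x < Vn om n -> (Z.abs x < Z.of_nat n)%Z.
Proof.
  intros Hom H. unfold Vn in H. assert (vpot om x - vpot om (Z.of_nat n) < 0) by lra.
  rewrite vpot_diff in H0. pose proof (qq_pos om Hom).
  assert (IZR (x * x - Z.of_nat n * Z.of_nat n) < 0).
  { destruct (Rlt_dec (IZR (x * x - Z.of_nat n * Z.of_nat n)) 0); auto. nra. }
  apply lt_IZR in H2. nia.
Qed.

Lemma iscb_false j x : iscb j x = false -> x <> Z.of_nat j /\ x <> (- Z.of_nat j)%Z.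
Proof.
  unfold iscb. intros H. apply Bool.orb_false_iff in H. destruct H as [H1 H2].
  apply Z.eqb_neq in H1. apply Z.eqb_neq in H2. auto.
Qed.

Lemma iscb_true j x : iscb j x = true -> x = Z.of_nat j \/ x = (- Z.of_nat j)%Z.
Proof.
  unfold iscb. intros H. apply Bool.orb_true_iff in H. destruct H as [H|H]; apply Z.eqb_eq in H; auto.
Qed.

Lemma cen_le1 j sg y : Rabs sg = 1 -> Rabs (cen j sg y) <= 1.
Proof.
  intros Hs. unfold cen. destruct (Z.eq_dec _ _); [rewrite Rabs_R1; lra|].
  destruct (Z.eq_dec _ _); [lra| rewrite Rabs_R0; lra].
Qed.

Lemma cen_nz j sg y : cen j sg y <> 0 -> Z.abs y = Z.of_nat j.
Proof.
  unfold cen. destruct (Z.eq_dec _ _); [lia|]. destruct (Z.eq_dec _ _); [lia|]. intro H; lra.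
Qed.

Lemma wh_pos x : 0 < wh x.
Proof. unfold wh. apply Rinv_0_lt_compat, pow_lt. lra. Qed.

Lemma wh_le1 x : wh x <= 1.
Proof. unfold wh. rewrite <- Rinv_1. apply Rinv_le_contravar; [lra|]. apply pow_R1_Rle. lra. Qed.

Lemma wh_step x y : (Z.abs_nat y <= S (Z.abs_nat x))%nat -> wh x <= 2 * wh y.
Proof.
  intros H. unfold wh.
  replace (/ 2 ^ Z.abs_nat x) with (2 * / 2 ^ (S (Z.abs_nat x))).
  2:{ simpl. field. apply pow_nonzero. lra. }
  apply Rmult_le_compat_l; [lra|].
  apply Rinv_le_contravar; [apply pow_lt; lra|]. apply Rle_pow; [lra|lia].
Qed.

Lemma wh_p1 x : wh (x + 1) <= 2 * wh x.
Proof. apply wh_step. lia. Qed.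
Lemma wh_m1 x : wh (x - 1) <= 2 * wh x.
Proof. apply wh_step. lia. Qed.

Lemma cen_wh j sg x : Rabs sg = 1 ->
  Rabs (cen j sg (x + 1)) + Rabs (cen j sg (x - 1)) <= Bc j * wh x.
Proof.
  intros Hs.
  assert (Hb : forall y, Rabs (cen j sg y) <> 0 -> (Z.abs_nat x <= S j)%nat -> Rabs (cen j sg y) <= 2 ^ (j+1) * wh x).
  { intros y _ Hx. eapply Rle_trans; [apply cen_le1; auto|].
    unfold wh. rewrite <- (Rinv_r (2 ^ (j+1))) by (apply pow_nonzero; lra).
    apply Rmult_le_compat_l; [apply pow_le; lra|].
    apply Rinv_le_contravar; [apply pow_lt; lra|]. apply Rle_pow; [lra|lia]. }
  assert (H1 : Rabs (cen j sg (x + 1)) <= 2 ^ (j+1) * wh x).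
  { destruct (Req_dec (cen j sg (x+1)) 0) as [E|E].
    - rewrite E, Rabs_R0. apply Rmult_le_pos; [apply pow_le; lra| left; apply wh_pos].
    - apply Hb; [apply Rabs_no_R0; auto|]. apply cen_nz in E. lia. }
  assert (H2 : Rabs (cen j sg (x - 1)) <= 2 ^ (j+1) * wh x).
  { destruct (Req_dec (cen j sg (x-1)) 0) as [E|E].
    - rewrite E, Rabs_R0. apply Rmult_le_pos; [apply pow_le; lra| left; apply wh_pos].
    - apply Hb; [apply Rabs_no_R0; auto|]. apply cen_nz in E. lia. }
  unfold Bc. replace (j + 2)%nat with (S (j + 1)) by lia. simpl. lra.
Qed.

Lemma cen_one j sg x : Rabs sg = 1 ->
  Rabs (cen j sg (x + 1)) + Rabs (cen j sg (x - 1)) <= Bc j * 1.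
Proof.
  intros Hs. pose proof (cen_le1 j sg (x+1) Hs). pose proof (cen_le1 j sg (x-1) Hs).
  pose proof (Bc_ge4 j). lra.
Qed.

Lemma div_bound a b c : 0 < c -> c <= Rabs b -> Rabs (a / b) <= Rabs a / c.
Proof.
  intros Hc Hb. assert (b <> 0) by (intro; subst; rewrite Rabs_R0 in Hb; lra).
  rewrite Rabs_div by auto. unfold Rdiv. apply Rmult_le_compat_l; [apply Rabs_pos|].
  apply Rinv_le_contravar; auto.
Qed.

Lemma den_bound om eps j l x : 0 < om -> 0 < eps -> eps <= qq om / 8 ->
  Rabs (l - Vn om j) <= qq om / 2 -> iscb j x = false ->
  qq om / 4 <= Rabs (vpot om x - l + 2 * eps).
Proof.
  intros Hom He He2 Hl Hx. apply iscb_false in Hx. destruct Hx as [Hx1 Hx2].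
  pose proof (vpot_gap om j x Hom Hx1 Hx2).
  replace (vpot om x - l + 2 * eps) with ((vpot om x - Vn om j) - (l - Vn om j) + 2 * eps) by ring.
  pose proof (Rabs_triang_inv (vpot om x - Vn om j) (l - Vn om j - 2 * eps)).
  replace (vpot om x - Vn om j - (l - Vn om j) + 2 * eps) with
    (vpot om x - Vn om j - (l - Vn om j - 2 * eps)) by ring.
  pose proof (Rabs_triang (l - Vn om j) (- (2 * eps))).
  replace (l - Vn om j + - (2 * eps)) with (l - Vn om j - 2 * eps) in H1 by ring.
  rewrite Rabs_Ropp, (Rabs_pos_eq (2 * eps)) in H1 by lra.
  lra.
Qed.

Lemma PhiL_bound om eps j sg B w l h : 0 <= eps -> Rabs sg = 1 -> (forall x, 0 < w x <= 1) ->
  Inv om j B w l h -> Rabs (PhiL om eps j sg h - Vn om j) <= eps * (4 + 2 * B).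
Proof.
  intros He Hs Hw [_ Hh]. unfold PhiL.
  set (y1 := (Z.of_nat j + 1)%Z). set (y2 := (Z.of_nat j - 1)%Z).
  replace (Vn om j + eps * (2 - (cen j sg y1 + h y1) - (cen j sg y2 + h y2)) - Vn om j)
    with (eps * (2 - (cen j sg y1 + h y1) - (cen j sg y2 + h y2))) by ring.
  rewrite Rabs_mult, (Rabs_pos_eq eps) by lra.
  apply Rmult_le_compat_l; auto.
  pose proof (cen_le1 j sg y1 Hs). pose proof (cen_le1 j sg y2 Hs).
  pose proof (Hh y1). pose proof (Hh y2). destruct (Hw y1). destruct (Hw y2).
  assert (B * w y1 <= B).
  { destruct (Rle_dec 0 B). - rewrite <- (Rmult_1_r B) at 2. apply Rmult_le_compat_l; lra.
    - pose proof (Rabs_pos (h y1)). nra. }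
  assert (B * w y2 <= B).
  { destruct (Rle_dec 0 B). - rewrite <- (Rmult_1_r B) at 2. apply Rmult_le_compat_l; lra.
    - pose proof (Rabs_pos (h y2)). nra. }
  eapply Rle_trans. { apply Rabs_triang. } rewrite Rabs_Ropp.
  eapply Rle_trans. { apply Rplus_le_compat_r. apply Rabs_triang. } rewrite Rabs_Ropp.
  rewrite Rabs_pos_eq by lra.
  pose proof (Rabs_triang (cen j sg y1) (h y1)). pose proof (Rabs_triang (cen j sg y2) (h y2)).
  lra.
Qed.

Lemma PhiH_bound om eps j sg B w l h x : 0 < om -> 0 < eps -> eps <= qq om / 8 -> 0 <= B ->
  (forall x, 0 < w x <= 1) -> (forall x, w (x + 1)%Z <= 2 * w x /\ w (x - 1)%Z <= 2 * w x) ->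
  (forall x, Rabs (cen j sg (x + 1)) + Rabs (cen j sg (x - 1)) <= B * w x) ->
  Inv om j B w l h -> Rabs (PhiH om eps j sg l h x) <= 20 * eps / qq om * B * w x.
Proof.
  intros Hom He He2 HB Hw Hw2 Hcw [Hl Hh]. pose proof (qq_pos om Hom) as Hq.
  unfold PhiH. destruct (iscb j x) eqn:Ex.
  - rewrite Rabs_R0. destruct (Hw x). apply Rmult_le_pos; [|lra].
    apply Rmult_le_pos; [|lra]. unfold Rdiv. apply Rmult_le_pos; [lra|]. left; apply Rinv_0_lt_compat; lra.
  - pose proof (den_bound om eps j l x Hom He He2 Hl Ex) as Hd.
    eapply Rle_trans; [apply (div_bound _ _ (qq om / 4)); [lra|exact Hd]|].
    rewrite Rabs_mult, (Rabs_pos_eq eps) by lra.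
    set (S := (cen j sg (x + 1) + h (x + 1)%Z + (cen j sg (x - 1) + h (x - 1)%Z))).
    assert (HS : Rabs S <= 5 * B * w x).
    { unfold S. specialize (Hcw x). destruct (Hw2 x).
      pose proof (Hh (x+1)%Z). pose proof (Hh (x-1)%Z).
      assert (B * w (x + 1)%Z <= B * (2 * w x)) by (apply Rmult_le_compat_l; lra).
      assert (B * w (x - 1)%Z <= B * (2 * w x)) by (apply Rmult_le_compat_l; lra).
      pose proof (Rabs_triang (cen j sg (x + 1) + h (x + 1)%Z) (cen j sg (x - 1) + h (x - 1)%Z)).
      pose proof (Rabs_triang (cen j sg (x + 1)) (h (x + 1)%Z)).
      pose proof (Rabs_triang (cen j sg (x - 1)) (h (x - 1)%Z)).
      lra. }
    replace (20 * eps / qq om * B * w x) with (eps * (5 * B * w x) / (qq om / 4)) by (field; lra).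
    unfold Rdiv. apply Rmult_le_compat_r; [left; apply Rinv_0_lt_compat; lra|].
    apply Rmult_le_compat_l; lra.
Qed.

Lemma PhiL_contr om eps j sg w h1 h2 a : 0 <= eps -> (forall x, 0 < w x <= 1) ->
  (forall x, Rabs (h1 x - h2 x) <= a * w x) ->
  Rabs (PhiL om eps j sg h1 - PhiL om eps j sg h2) <= 2 * eps * a.
Proof.
  intros He Hw Hd. unfold PhiL.
  set (y1 := (Z.of_nat j + 1)%Z). set (y2 := (Z.of_nat j - 1)%Z).
  replace (Vn om j + eps * (2 - (cen j sg y1 + h1 y1) - (cen j sg y2 + h1 y2)) -
      (Vn om j + eps * (2 - (cen j sg y1 + h2 y1) - (cen j sg y2 + h2 y2))))
    with (- eps * ((h1 y1 - h2 y1) + (h1 y2 - h2 y2))) by ring.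
  rewrite Rabs_mult, Rabs_Ropp, (Rabs_pos_eq eps) by lra.
  replace (2 * eps * a) with (eps * (2 * a)) by ring.
  apply Rmult_le_compat_l; auto.
  pose proof (Hd y1). pose proof (Hd y2). destruct (Hw y1). destruct (Hw y2).
  pose proof (Rabs_pos (h1 y1 - h2 y1)).
  assert (0 <= a) by nra.
  assert (a * w y1 <= a) by nra. assert (a * w y2 <= a) by nra.
  pose proof (Rabs_triang (h1 y1 - h2 y1) (h1 y2 - h2 y2)). lra.
Qed.

Lemma PhiH_contr om eps j sg B w l1 h1 l2 h2 a x : 0 < om -> 0 < eps -> eps <= qq om / 8 -> 0 <= B ->
  (forall x, 0 < w x <= 1) -> (forall x, w (x + 1)%Z <= 2 * w x /\ w (x - 1)%Z <= 2 * w x) ->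
  (forall x, Rabs (cen j sg (x + 1)) + Rabs (cen j sg (x - 1)) <= B * w x) ->
  Inv om j B w l1 h1 -> Inv om j B w l2 h2 ->
  Rabs (l1 - l2) <= a -> (forall x, Rabs (h1 x - h2 x) <= a * w x) ->
  Rabs (PhiH om eps j sg l1 h1 x - PhiH om eps j sg l2 h2 x)
    <= eps * (16 / qq om + 80 * B / qq om ^ 2) * a * w x.
Proof.
  intros Hom He He2 HB Hw Hw2 Hcw [Hl1 Hh1] [Hl2 Hh2] Hdl Hdh.
  pose proof (qq_pos om Hom) as Hq.
  assert (Ha : 0 <= a) by (pose proof (Rabs_pos (l1 - l2)); lra).
  unfold PhiH. destruct (iscb j x) eqn:Ex.
  - unfold Rminus. rewrite Rplus_opp_r, Rabs_R0. destruct (Hw x).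
    apply Rmult_le_pos; [|lra]. apply Rmult_le_pos; [|lra]. apply Rmult_le_pos; [lra|].
    assert (0 < 16 / qq om) by (apply Rdiv_lt_0_compat; lra).
    assert (0 <= 80 * B / qq om ^ 2) by (apply Rmult_le_pos; [lra| left; apply Rinv_0_lt_compat, pow_lt; lra]).
    lra.
  - pose proof (den_bound om eps j l1 x Hom He He2 Hl1 Ex) as Hd1.
    pose proof (den_bound om eps j l2 x Hom He He2 Hl2 Ex) as Hd2.
    set (D1 := vpot om x - l1 + 2 * eps) in *. set (D2 := vpot om x - l2 + 2 * eps) in *.
    set (S1 := (cen j sg (x + 1) + h1 (x + 1)%Z + (cen j sg (x - 1) + h1 (x - 1)%Z))).
    set (S2 := (cen j sg (x + 1) + h2 (x + 1)%Z + (cen j sg (x - 1) + h2 (x - 1)%Z))).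
    assert (D1 <> 0) by (intro E; rewrite E, Rabs_R0 in Hd1; lra).
    assert (D2 <> 0) by (intro E; rewrite E, Rabs_R0 in Hd2; lra).
    replace (eps * S1 / D1 - eps * S2 / D2) with
      (eps * ((S1 - S2) * / D1 + S2 * (l1 - l2) * (/ D1 * / D2))).
    2:{ unfold D1, D2. field. split; auto. }
    destruct (Hw x) as [Hw0 Hw1]. destruct (Hw2 x) as [Hwp Hwm].
    assert (HS2 : Rabs S2 <= 5 * B * w x).
    { unfold S2. specialize (Hcw x).
      pose proof (Hh2 (x+1)%Z). pose proof (Hh2 (x-1)%Z).
      assert (B * w (x + 1)%Z <= B * (2 * w x)) by (apply Rmult_le_compat_l; lra).
      assert (B * w (x - 1)%Z <= B * (2 * w x)) by (apply Rmult_le_compat_l; lra).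
      pose proof (Rabs_triang (cen j sg (x + 1) + h2 (x + 1)%Z) (cen j sg (x - 1) + h2 (x - 1)%Z)).
      pose proof (Rabs_triang (cen j sg (x + 1)) (h2 (x + 1)%Z)).
      pose proof (Rabs_triang (cen j sg (x - 1)) (h2 (x - 1)%Z)).
      lra. }
    assert (HS12 : Rabs (S1 - S2) <= 4 * a * w x).
    { replace (S1 - S2) with ((h1 (x + 1)%Z - h2 (x+1)%Z) + (h1 (x - 1)%Z - h2 (x-1)%Z))
        by (unfold S1, S2; ring).
      pose proof (Hdh (x+1)%Z). pose proof (Hdh (x-1)%Z).
      assert (a * w (x + 1)%Z <= a * (2 * w x)) by (apply Rmult_le_compat_l; lra).
      assert (a * w (x - 1)%Z <= a * (2 * w x)) by (apply Rmult_le_compat_l; lra).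
      pose proof (Rabs_triang (h1 (x + 1)%Z - h2 (x+1)%Z) (h1 (x - 1)%Z - h2 (x-1)%Z)). lra. }
    assert (HI1 : Rabs (/ D1) <= 4 / qq om).
    { rewrite Rabs_inv. replace (4 / qq om) with (/ (qq om / 4)) by (field; lra).
      apply Rinv_le_contravar; lra. }
    assert (HI2 : Rabs (/ D2) <= 4 / qq om).
    { rewrite Rabs_inv. replace (4 / qq om) with (/ (qq om / 4)) by (field; lra).
      apply Rinv_le_contravar; lra. }
    rewrite Rabs_mult, (Rabs_pos_eq eps) by lra.
    replace (eps * (16 / qq om + 80 * B / qq om ^ 2) * a * w x) with
      (eps * ((4 * a * w x) * (4 / qq om) + (5 * B * w x) * a * ((4 / qq om) * (4 / qq om))))
      by (field; lra).
    apply Rmult_le_compat_l; [lra|].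
    eapply Rle_trans; [apply Rabs_triang|].
    apply Rplus_le_compat.
    + rewrite Rabs_mult. apply Rmult_le_compat; auto using Rabs_pos.
    + rewrite !Rabs_mult. apply Rmult_le_compat; [apply Rmult_le_pos; apply Rabs_pos|
        apply Rmult_le_pos; apply Rabs_pos| apply Rmult_le_compat; auto using Rabs_pos|].
      apply Rmult_le_compat; auto using Rabs_pos.
Qed.

Definition dl (om : R) (j : nat) : R :=
  Rmin (qq om / (8 + 4 * Bc j)) (/ (2 * (2 + 16 / qq om + 80 * Bc j / qq om ^ 2))).
Definition kap (om eps : R) (j : nat) : R := eps * (2 + 16 / qq om + 80 * Bc j / qq om ^ 2).

Lemma dl_props om eps j : 0 < om -> 0 < eps -> eps <= dl om j ->
  eps <= qq om / 8 /\ eps * (4 + 2 * Bc j) <= qq om / 2 /\ 20 * eps / qq om <= 1 /\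
  0 <= kap om eps j <= / 2 /\ 2 * eps <= kap om eps j /\
  eps * (16 / qq om + 80 * Bc j / qq om ^ 2) <= kap om eps j /\ 4 * eps <= qq om / 2.
Proof.
  intros Hom He Hd. pose proof (qq_pos om Hom) as Hq. pose proof (Bc_ge4 j) as HB.
  unfold dl in Hd.
  pose proof (Rmin_l (qq om / (8 + 4 * Bc j)) (/ (2 * (2 + 16 / qq om + 80 * Bc j / qq om ^ 2)))).
  pose proof (Rmin_r (qq om / (8 + 4 * Bc j)) (/ (2 * (2 + 16 / qq om + 80 * Bc j / qq om ^ 2)))).
  assert (H1 : eps * (8 + 4 * Bc j) <= qq om).
  { assert (H3 : eps <= qq om / (8 + 4 * Bc j)) by lra.
    apply (Rmult_le_compat_r (8 + 4 * Bc j)) in H3; [|lra].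
    replace (qq om / (8 + 4 * Bc j) * (8 + 4 * Bc j)) with (qq om) in H3 by (field; lra). lra. }
  assert (HK : 0 < 2 + 16 / qq om + 80 * Bc j / qq om ^ 2).
  { assert (0 < 16 / qq om) by (apply Rdiv_lt_0_compat; lra).
    assert (0 < 80 * Bc j / qq om ^ 2) by (apply Rdiv_lt_0_compat; [lra| apply pow_lt; lra]). lra. }
  assert (H2 : kap om eps j <= / 2).
  { unfold kap. set (K := 2 + 16 / qq om + 80 * Bc j / qq om ^ 2) in *. assert (H3 : eps <= / (2 * K)) by lra.
    apply (Rmult_le_compat_r K) in H3; [|lra].
    replace (/ (2 * K) * K) with (/2) in H3 by (field; lra). lra. }
  unfold kap in *.
  assert (0 < 16 / qq om) by (apply Rdiv_lt_0_compat; lra).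
  assert (0 < 80 * Bc j / qq om ^ 2) by (apply Rdiv_lt_0_compat; [lra| apply pow_lt; lra]).
  repeat split; try nra.
Qed.

Definition WP (w : Z -> R) : Prop :=
  (forall x, 0 < w x <= 1) /\ (forall x, w (x + 1)%Z <= 2 * w x /\ w (x - 1)%Z <= 2 * w x).
Definition CW (j : nat) (sg : R) (w : Z -> R) : Prop :=
  forall x, Rabs (cen j sg (x + 1)) + Rabs (cen j sg (x - 1)) <= Bc j * w x.

Lemma WP_wh : WP wh.
Proof. split; [intros; split; [apply wh_pos|apply wh_le1]| intros; split; [apply wh_p1|apply wh_m1]]. Qed.
Lemma WP_one : WP (fun _ => 1).
Proof. split; intros; lra. Qed.
Lemma CW_wh j sg : Rabs sg = 1 -> CW j sg wh.
Proof. intros Hs x. apply cen_wh; auto. Qed.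
Lemma CW_one j sg : Rabs sg = 1 -> CW j sg (fun _ => 1).
Proof. intros Hs x. apply cen_one; auto. Qed.

Lemma step_inv om eps j sg w l h : 0 < om -> 0 < eps -> eps <= dl om j -> Rabs sg = 1 ->
  WP w -> CW j sg w -> Inv om j (Bc j) w l h ->
  Inv om j (Bc j) w (PhiL om eps j sg h) (PhiH om eps j sg l h).
Proof.
  intros Hom He Hd Hs [Hw Hw2] Hcw HI.
  destruct (dl_props om eps j Hom He Hd) as (D1 & D2 & D3 & D4 & D5 & D6 & D7).
  pose proof (Bc_ge4 j).
  split.
  - pose proof (PhiL_bound om eps j sg (Bc j) w l h ltac:(lra) Hs Hw HI). lra.
  - intros x. pose proof (PhiH_bound om eps j sg (Bc j) w l h x Hom He D1 ltac:(lra) Hw Hw2 Hcw HI).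
    eapply Rle_trans; [exact H0|]. destruct (Hw x).
    rewrite Rmult_assoc. rewrite <- (Rmult_1_l (Bc j * w x)) at 2.
    apply Rmult_le_compat_r; [apply Rmult_le_pos; lra|lra].
Qed.

Lemma step_contr om eps j sg w l1 h1 l2 h2 a : 0 < om -> 0 < eps -> eps <= dl om j -> Rabs sg = 1 ->
  WP w -> CW j sg w -> Inv om j (Bc j) w l1 h1 -> Inv om j (Bc j) w l2 h2 ->
  Rabs (l1 - l2) <= a -> (forall x, Rabs (h1 x - h2 x) <= a * w x) ->
  Rabs (PhiL om eps j sg h1 - PhiL om eps j sg h2) <= kap om eps j * a /\
  forall x, Rabs (PhiH om eps j sg l1 h1 x - PhiH om eps j sg l2 h2 x) <= kap om eps j * a * w x.
Proof.
  intros Hom He Hd Hs [Hw Hw2] Hcw HI1 HI2 Hdl Hdh.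
  destruct (dl_props om eps j Hom He Hd) as (D1 & D2 & D3 & D4 & D5 & D6 & D7).
  pose proof (Bc_ge4 j).
  assert (Ha : 0 <= a) by (pose proof (Rabs_pos (l1 - l2)); lra).
  split.
  - pose proof (PhiL_contr om eps j sg w h1 h2 a ltac:(lra) Hw Hdh). nra.
  - intros x. pose proof (PhiH_contr om eps j sg (Bc j) w l1 h1 l2 h2 a x Hom He D1 ltac:(lra)
      Hw Hw2 Hcw HI1 HI2 Hdl Hdh).
    destruct (Hw x). eapply Rle_trans; [exact H0|].
    apply Rmult_le_compat_r; [lra|]. apply Rmult_le_compat_r; lra.
Qed.

Fixpoint itr (om eps : R) (j : nat) (sg : R) (k : nat) : R * (Z -> R) :=
  match k with
  | O => (Vn om j, fun _ => 0)
  | S k => let p := itr om eps j sg k in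
           (PhiL om eps j sg (snd p), PhiH om eps j sg (fst p) (snd p))
  end.

Definition lamfix om eps j sg : R := real (Lim_seq (fun k => fst (itr om eps j sg k))).
Definition hfix om eps j sg (x : Z) : R := real (Lim_seq (fun k => snd (itr om eps j sg k) x)).
Definition Ffix om eps j sg (x : Z) : R := cen j sg x + hfix om eps j sg x.

Section Constr.
Variables (om eps : R) (j : nat) (sg : R).
Hypotheses (Hom : 0 < om) (He : 0 < eps) (Hd : eps <= dl om j) (Hs : Rabs sg = 1).

Let a0 := qq om + 2 * Bc j.

Lemma itr_inv k : Inv om j (Bc j) wh (fst (itr om eps j sg k)) (snd (itr om eps j sg k)).
Proof.
  induction k as [|k IH].
  - simpl. split.
    + unfold Rminus. rewrite Rplus_opp_r, Rabs_R0. pose proof (qq_pos om Hom). lra.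
    + intros x. rewrite Rabs_R0. pose proof (Bc_ge4 j). pose proof (wh_pos x). nra.
  - simpl. apply step_inv; auto using WP_wh, CW_wh.
Qed.

Lemma itr_diff k :
  Rabs (fst (itr om eps j sg (S k)) - fst (itr om eps j sg k)) <= a0 * kap om eps j ^ k /\
  forall x, Rabs (snd (itr om eps j sg (S k)) x - snd (itr om eps j sg k) x) <= a0 * kap om eps j ^ k * wh x.
Proof.
  induction k as [|k IH].
  - destruct (itr_inv 1) as [L1 H1]. destruct (itr_inv 0) as [L0 H0].
    simpl pow. rewrite !Rmult_1_r. split.
    + replace (fst (itr om eps j sg 1) - fst (itr om eps j sg 0)) with
        ((fst (itr om eps j sg 1) - Vn om j) - (fst (itr om eps j sg 0) - Vn om j)) by ring.
      eapply Rle_trans; [apply Rabs_triang|]. rewrite Rabs_Ropp. unfold a0.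
      pose proof (Bc_ge4 j). lra.
    + intros x. specialize (H1 x). specialize (H0 x).
      eapply Rle_trans; [apply Rabs_triang|]. rewrite Rabs_Ropp. unfold a0.
      pose proof (qq_pos om Hom). pose proof (wh_pos x). nra.
  - destruct IH as [IHl IHh].
    destruct (step_contr om eps j sg wh _ _ _ _ (a0 * kap om eps j ^ k) Hom He Hd Hs WP_wh (CW_wh j sg Hs)
      (itr_inv (S k)) (itr_inv k) IHl IHh) as [C1 C2].
    change (fst (itr om eps j sg (S (S k)))) with (PhiL om eps j sg (snd (itr om eps j sg (S k)))).
    change (snd (itr om eps j sg (S (S k)))) with
      (PhiH om eps j sg (fst (itr om eps j sg (S k))) (snd (itr om eps j sg (S k)))).
    change (fst (itr om eps j sg (S k))) with (PhiL om eps j sg (snd (itr om eps j sg k))) at 2.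
    change (snd (itr om eps j sg (S k))) with
      (PhiH om eps j sg (fst (itr om eps j sg k)) (snd (itr om eps j sg k))) at 3.
    split.
    + eapply Rle_trans; [exact C1|]. simpl pow. right; ring.
    + intros x. eapply Rle_trans; [apply C2|]. simpl pow. right; ring.
Qed.
End Constr.

Lemma cen_par j sg x : (j = 0%nat -> sg = 1) -> sg * sg = 1 -> cen j sg (- x) = sg * cen j sg x.
Proof.
  intros Hj Hs. unfold cen.
  destruct (Z.eq_dec x (Z.of_nat j)) as [E1|E1].
  - subst x. destruct (Z.eq_dec (- Z.of_nat j) (Z.of_nat j)) as [E2|E2].
    + assert (j = 0%nat) by lia. rewrite Hj by auto. ring.
    + destruct (Z.eq_dec (- Z.of_nat j) (- Z.of_nat j)); [ring|lia].
  - destruct (Z.eq_dec x (- Z.of_nat j)) as [E2|E2].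
    + subst x. destruct (Z.eq_dec (- - Z.of_nat j) (Z.of_nat j)); [lra|lia].
    + destruct (Z.eq_dec (- x) (Z.of_nat j)); [lia|].
      destruct (Z.eq_dec (- x) (- Z.of_nat j)); [lia|ring].
Qed.

Lemma iscb_opp j x : iscb j (- x) = iscb j x.
Proof.
  unfold iscb. destruct (Z.eqb_spec x (Z.of_nat j)); destruct (Z.eqb_spec x (- Z.of_nat j));
  destruct (Z.eqb_spec (- x) (Z.of_nat j)); destruct (Z.eqb_spec (- x) (- Z.of_nat j)); simpl; auto; lia.
Qed.

Lemma PhiH_par om eps j sg l h x : (j = 0%nat -> sg = 1) -> sg * sg = 1 ->
  (forall y, h (- y)%Z = sg * h y) -> PhiH om eps j sg l h (- x) = sg * PhiH om eps j sg l h x.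
Proof.
  intros Hj Hs Hh. unfold PhiH. rewrite iscb_opp. destruct (iscb j x); [ring|].
  rewrite vpot_opp.
  replace (- x + 1)%Z with (- (x - 1))%Z by ring. replace (- x - 1)%Z with (- (x + 1))%Z by ring.
  rewrite !cen_par, !Hh by auto. unfold Rdiv. ring.
Qed.

Lemma Aop_par om eps sg f x : (forall y, f (- y)%Z = sg * f y) -> Aop om eps f (- x) = sg * Aop om eps f x.
Proof.
  intros Hf. unfold Aop, Lap. rewrite vpot_opp.
  replace (- x + 1)%Z with (- (x - 1))%Z by ring. replace (- x - 1)%Z with (- (x + 1))%Z by ring.
  rewrite !Hf. ring.
Qed.

Section Constr2.
Variables (om eps : R) (j : nat) (sg : R).
Hypotheses (Hom : 0 < om) (He : 0 < eps) (Hd : eps <= dl om j) (Hs : Rabs sg = 1).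

Let a0 := qq om + 2 * Bc j.
Let kp := kap om eps j.
Let it := itr om eps j sg.

Lemma a0_pos : 0 <= a0.
Proof. unfold a0. pose proof (qq_pos om Hom). pose proof (Bc_ge4 j). lra. Qed.

Lemma kp_props : 0 <= kp <= / 2.
Proof. destruct (dl_props om eps j Hom He Hd) as (_&_&_&D&_). exact D. Qed.

Lemma lam_conv k : Rabs (fst (it k) - lamfix om eps j sg) <= 2 * a0 * kp ^ k.
Proof.
  unfold lamfix. apply (geo_lim (fun k => fst (it k)) a0 kp a0_pos kp_props).
  intros i. apply (itr_diff om eps j sg Hom He Hd Hs i).
Qed.

Lemma h_conv k x : Rabs (snd (it k) x - hfix om eps j sg x) <= 2 * a0 * kp ^ k * wh x.
Proof.
  unfold hfix. pose proof (wh_pos x).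
  replace (2 * a0 * kp ^ k * wh x) with (2 * (a0 * wh x) * kp ^ k) by ring.
  apply (geo_lim (fun k => snd (it k) x) (a0 * wh x) kp); [pose proof a0_pos; nra| apply kp_props|].
  intros i. destruct (itr_diff om eps j sg Hom He Hd Hs i) as [_ H2].
  eapply Rle_trans; [apply H2|]. right; unfold kp, a0; ring.
Qed.

Lemma kp_lt1 : 0 <= kp < 1.
Proof. pose proof kp_props. lra. Qed.

Lemma fix_inv : Inv om j (Bc j) wh (lamfix om eps j sg) (hfix om eps j sg).
Proof.
  split.
  - apply (geo_le _ _ (2 * a0) kp kp_lt1). intros k.
    destruct (itr_inv om eps j sg Hom He Hd Hs k) as [L _].
    pose proof (lam_conv k).
    replace (lamfix om eps j sg - Vn om j) with (-(fst (it k) - lamfix om eps j sg) + (fst (it k) - Vn om j)) by ring.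
    eapply Rle_trans; [apply Rabs_triang|]. rewrite Rabs_Ropp. fold it in L. lra.
  - intros x. apply (geo_le _ _ (2 * a0 * wh x) kp kp_lt1). intros k.
    destruct (itr_inv om eps j sg Hom He Hd Hs k) as [_ Hh].
    pose proof (h_conv k x). specialize (Hh x). fold it in Hh.
    replace (hfix om eps j sg x) with (-(snd (it k) x - hfix om eps j sg x) + snd (it k) x) by ring.
    eapply Rle_trans; [apply Rabs_triang|]. rewrite Rabs_Ropp. lra.
Qed.

Lemma conv_pair k :
  Rabs (fst (it k) - lamfix om eps j sg) <= 2 * a0 * kp ^ k /\
  forall x, Rabs (snd (it k) x - hfix om eps j sg x) <= 2 * a0 * kp ^ k * wh x.
Proof. split; [apply lam_conv| intros; apply h_conv]. Qed.

Lemma fix_eqL : lamfix om eps j sg = PhiL om eps j sg (hfix om eps j sg).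
Proof.
  apply Rminus_diag_uniq. apply (geo_zero _ (4 * a0) kp kp_lt1). intros k.
  destruct (conv_pair k) as [C1 C2].
  destruct (step_contr om eps j sg wh _ _ _ _ _ Hom He Hd Hs WP_wh (CW_wh j sg Hs)
    (itr_inv om eps j sg Hom He Hd Hs k) fix_inv C1 C2) as [S1 _].
  pose proof (lam_conv (S k)) as C3.
  change (fst (it (S k))) with (PhiL om eps j sg (snd (it k))) in C3.
  replace (lamfix om eps j sg - PhiL om eps j sg (hfix om eps j sg)) with
    (-(PhiL om eps j sg (snd (it k)) - lamfix om eps j sg) +
     (PhiL om eps j sg (snd (it k)) - PhiL om eps j sg (hfix om eps j sg))) by ring.
  eapply Rle_trans; [apply Rabs_triang|]. rewrite Rabs_Ropp.
  fold kp in S1. pose proof kp_props. pose proof a0_pos.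
  assert (kp ^ S k <= kp ^ k) by (simpl; pose proof (pow_le kp k ltac:(lra)); nra).
  assert (0 <= kp ^ k) by (apply pow_le; lra).
  fold it in S1. assert (a0 * (kp * kp ^ k) <= a0 * kp ^ k) by (apply Rmult_le_compat_l; nra).
  simpl in C3. simpl. nra.
Qed.

Lemma fix_eqH x : hfix om eps j sg x = PhiH om eps j sg (lamfix om eps j sg) (hfix om eps j sg) x.
Proof.
  apply Rminus_diag_uniq. apply (geo_zero _ (4 * a0 * wh x) kp kp_lt1). intros k.
  destruct (conv_pair k) as [C1 C2].
  destruct (step_contr om eps j sg wh _ _ _ _ _ Hom He Hd Hs WP_wh (CW_wh j sg Hs)
    (itr_inv om eps j sg Hom He Hd Hs k) fix_inv C1 C2) as [_ S2].
  specialize (S2 x).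
  pose proof (h_conv (S k) x) as C3.
  change (snd (it (S k))) with (PhiH om eps j sg (fst (it k)) (snd (it k))) in C3.
  replace (hfix om eps j sg x - PhiH om eps j sg (lamfix om eps j sg) (hfix om eps j sg) x) with
    (-(PhiH om eps j sg (fst (it k)) (snd (it k)) x - hfix om eps j sg x) +
     (PhiH om eps j sg (fst (it k)) (snd (it k)) x - PhiH om eps j sg (lamfix om eps j sg) (hfix om eps j sg) x)) by ring.
  eapply Rle_trans; [apply Rabs_triang|]. rewrite Rabs_Ropp.
  fold kp in S2. pose proof kp_props. pose proof a0_pos. pose proof (wh_pos x).
  assert (kp ^ S k <= kp ^ k) by (simpl; pose proof (pow_le kp k ltac:(lra)); nra).
  assert (0 <= kp ^ k) by (apply pow_le; lra).
  assert (0 <= a0 * wh x) by nra.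
  fold it in S2. assert (a0 * wh x * (kp * kp ^ k) <= a0 * wh x * kp ^ k) by (apply Rmult_le_compat_l; nra).
  simpl in C3. simpl. simpl in S2. nra.
Qed.

Lemma fix_uniq l h : Inv om j (Bc j) (fun _ => 1) l h -> l = PhiL om eps j sg h ->
  (forall x, h x = PhiH om eps j sg l h x) ->
  l = lamfix om eps j sg /\ forall x, h x = hfix om eps j sg x.
Proof.
  intros HI Hl Hh.
  assert (HI2 : Inv om j (Bc j) (fun _ => 1) (lamfix om eps j sg) (hfix om eps j sg)).
  { destruct fix_inv as [A B]. split; auto. intros x. specialize (B x). pose proof (wh_le1 x).
    pose proof (Bc_ge4 j). nra. }
  assert (Hk : forall k, Rabs (l - lamfix om eps j sg) <= a0 * kp ^ k /\
                 forall x, Rabs (h x - hfix om eps j sg x) <= a0 * kp ^ k * 1).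
  { induction k as [|k [IH1 IH2]].
    - destruct HI as [A1 B1]. destruct HI2 as [A2 B2]. simpl. rewrite !Rmult_1_r. split.
      + replace (l - lamfix om eps j sg) with ((l - Vn om j) - (lamfix om eps j sg - Vn om j)) by ring.
        eapply Rle_trans; [apply Rabs_triang|]. rewrite Rabs_Ropp. unfold a0.
        pose proof (Bc_ge4 j). lra.
      + intros x. specialize (B1 x). specialize (B2 x).
        eapply Rle_trans; [apply Rabs_triang|]. rewrite Rabs_Ropp. unfold a0.
        pose proof (qq_pos om Hom). lra.
    - destruct (step_contr om eps j sg (fun _ => 1) _ _ _ _ _ Hom He Hd Hs WP_one (CW_one j sg Hs)
        HI HI2 IH1 IH2) as [S1 S2].
      rewrite <- Hl, <- fix_eqL in S1. split.
      + eapply Rle_trans; [exact S1|]. fold kp. simpl. right; ring.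
      + intros x. specialize (S2 x). rewrite <- Hh, <- fix_eqH in S2.
        eapply Rle_trans; [exact S2|]. fold kp. simpl. right; ring. }
  split.
  - apply Rminus_diag_uniq. apply (geo_zero _ a0 kp kp_lt1). intros k. apply Hk.
  - intros x. apply Rminus_diag_uniq. apply (geo_zero _ a0 kp kp_lt1). intros k.
    destruct (Hk k) as [_ H2]. rewrite <- (Rmult_1_r (a0 * kp ^ k)). apply H2.
Qed.

End Constr2.

Lemma iscb_j j : iscb j (Z.of_nat j) = true.
Proof. unfold iscb. rewrite Z.eqb_refl. reflexivity. Qed.

Section Constr3.
Variables (om eps : R) (j : nat) (sg : R).
Hypotheses (Hom : 0 < om) (He : 0 < eps) (Hd : eps <= dl om j) (Hs : Rabs sg = 1)
  (Hj : j = 0%nat -> sg = 1) (Hs2 : sg * sg = 1).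

Lemma itr_par k (x : Z) : snd (itr om eps j sg k) (- x)%Z = sg * snd (itr om eps j sg k) x.
Proof.
  revert x. induction k as [|k IH]; intros x.
  - simpl. ring.
  - simpl. apply PhiH_par; auto.
Qed.

Lemma hfix_par (x : Z) : hfix om eps j sg (- x)%Z = sg * hfix om eps j sg x.
Proof.
  apply Rminus_diag_uniq.
  apply (geo_zero _ (2 * (qq om + 2 * Bc j) * (wh (- x) + wh x)) (kap om eps j)
     (kp_lt1 om eps j Hom He Hd)). intros k.
  pose proof (h_conv om eps j sg Hom He Hd Hs k (- x)) as C1.
  pose proof (h_conv om eps j sg Hom He Hd Hs k x) as C2.
  rewrite itr_par in C1.
  replace (hfix om eps j sg (- x) - sg * hfix om eps j sg x) with
    (- (sg * snd (itr om eps j sg k) x - hfix om eps j sg (- x)) + sg * (snd (itr om eps j sg k) x - hfix om eps j sg x)) by ring.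
  eapply Rle_trans; [apply Rabs_triang|]. rewrite Rabs_Ropp, Rabs_mult, Hs.
  lra.
Qed.

Lemma Ffix_par (x : Z) : Ffix om eps j sg (- x)%Z = sg * Ffix om eps j sg x.
Proof. unfold Ffix. rewrite cen_par, hfix_par by auto. ring. Qed.

Lemma hfix_j : hfix om eps j sg (Z.of_nat j) = 0.
Proof. rewrite fix_eqH by auto. unfold PhiH. rewrite iscb_j. reflexivity. Qed.

Lemma Ffix_j : Ffix om eps j sg (Z.of_nat j) = 1.
Proof.
  unfold Ffix. rewrite hfix_j. unfold cen. destruct (Z.eq_dec _ _); [ring|lia].
Qed.

Lemma Ffix_eig x : Aop om eps (Ffix om eps j sg) x = lamfix om eps j sg * Ffix om eps j sg x.
Proof.
  destruct (iscb j x) eqn:Ex.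
  - assert (Hc : forall y, y = Z.of_nat j -> Aop om eps (Ffix om eps j sg) y = lamfix om eps j sg * Ffix om eps j sg y).
    { intros y ->. rewrite Ffix_j. unfold Aop, Lap. rewrite Ffix_j.
      rewrite (fix_eqL om eps j sg Hom He Hd Hs). unfold PhiL, Ffix, Vn. ring. }
    apply iscb_true in Ex. destruct Ex as [->| ->]; [apply Hc; auto|].
    rewrite (Aop_par om eps sg) by apply Ffix_par. rewrite Hc by auto. rewrite Ffix_par. ring.
  - pose proof (fix_eqH om eps j sg Hom He Hd Hs x) as E. unfold PhiH in E. rewrite Ex in E.
    destruct (iscb_false _ _ Ex) as [N1 N2].
    assert (Hc : cen j sg x = 0).
    { unfold cen. destruct (Z.eq_dec _ _); [lia|]. destruct (Z.eq_dec _ _); [lia|auto]. }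
    destruct (fix_inv om eps j sg Hom He Hd Hs) as [L _].
    destruct (dl_props om eps j Hom He Hd) as (D1&_).
    pose proof (den_bound om eps j (lamfix om eps j sg) x Hom He D1 L Ex) as Hden.
    pose proof (qq_pos om Hom).
    assert (Hnz : vpot om x - lamfix om eps j sg + 2 * eps <> 0) by (intro Z0; rewrite Z0, Rabs_R0 in Hden; lra).
    assert (Fx : Ffix om eps j sg x = hfix om eps j sg x) by (unfold Ffix; rewrite Hc; ring).
    unfold Aop, Lap. rewrite Fx, E. unfold Ffix.
    set (V := vpot om x) in *. set (LL := lamfix om eps j sg) in *.
    set (u := cen j sg (x + 1) + hfix om eps j sg (x + 1)%Z).
    set (v := cen j sg (x - 1) + hfix om eps j sg (x - 1)%Z).
    field. auto.
Qed.

Lemma cen_wh0 x : Rabs (cen j sg x) <= 2 ^ j * wh x.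
Proof.
  destruct (Req_dec (cen j sg x) 0) as [E|E].
  - rewrite E, Rabs_R0. apply Rmult_le_pos; [apply pow_le; lra| left; apply wh_pos].
  - apply cen_nz in E. eapply Rle_trans; [apply cen_le1; auto|].
    unfold wh. replace (Z.abs_nat x) with j by lia. rewrite Rinv_r by (apply pow_nonzero; lra). lra.
Qed.

Lemma Ffix_wh x : Rabs (Ffix om eps j sg x) <= (2 ^ j + Bc j) * wh x.
Proof.
  unfold Ffix. eapply Rle_trans; [apply Rabs_triang|].
  destruct (fix_inv om eps j sg Hom He Hd Hs) as [_ Hh].
  pose proof (cen_wh0 x). specialize (Hh x). lra.
Qed.

Lemma Ffix_l2 : l2Z (Ffix om eps j sg).
Proof.
  unfold l2Z. set (C := 2 ^ j + Bc j).
  apply (@ex_series_le R_AbsRing R_CompleteNormedModule _ (fun k => (2 * C ^ 2) * (/ 4) ^ k)).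
  - intros k. change (norm ?a) with (Rabs a).
    pose proof (Ffix_wh (Z.of_nat k)) as A. pose proof (Ffix_wh (- Z.of_nat k - 1)) as B.
    fold C in A, B.
    assert (W1 : wh (Z.of_nat k) = (/2) ^ k).
    { unfold wh. rewrite Zabs2Nat.id. rewrite pow_inv. reflexivity. }
    assert (W2 : wh (- Z.of_nat k - 1) <= (/2) ^ k).
    { unfold wh. replace (Z.abs_nat (- Z.of_nat k - 1)) with (S k) by lia. rewrite <- pow_inv.
      simpl. pose proof (pow_le (/2) k ltac:(lra)). lra. }
    assert (0 <= (/ 2) ^ k) by (apply pow_le; lra).
    assert (0 <= C) by (unfold C; pose proof (pow_le 2 j ltac:(lra)); pose proof (Bc_ge4 j); lra).
    pose proof (wh_pos (- Z.of_nat k - 1)).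
    assert (Q : (/4) ^ k = (/2) ^ k * (/2) ^ k) by (rewrite <- Rpow_mult_distr; f_equal; field).
    rewrite Rabs_pos_eq by (apply Rplus_le_le_0_compat; apply pow2_ge_0).
    assert (A' : Rabs (Ffix om eps j sg (Z.of_nat k)) <= C * (/2) ^ k) by (rewrite <- W1; auto).
    assert (B' : Rabs (Ffix om eps j sg (- Z.of_nat k - 1)) <= C * (/2) ^ k).
    { eapply Rle_trans; [exact B|]. apply Rmult_le_compat_l; auto. }
    rewrite <- !Rsqr_pow2. rewrite (Rsqr_abs (Ffix _ _ _ _ (Z.of_nat k))),
      (Rsqr_abs (Ffix _ _ _ _ (- Z.of_nat k - 1))).
    assert (Rsqr (Rabs (Ffix om eps j sg (Z.of_nat k))) <= Rsqr (C * (/2)^k))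
      by (apply Rsqr_incr_1; auto using Rabs_pos; apply Rmult_le_pos; auto).
    assert (Rsqr (Rabs (Ffix om eps j sg (- Z.of_nat k - 1))) <= Rsqr (C * (/2)^k))
      by (apply Rsqr_incr_1; auto using Rabs_pos; apply Rmult_le_pos; auto).
    rewrite Q. unfold Rsqr in *. nra.
  - apply (@ex_series_scal_l R_AbsRing R_NormedModule (2 * C ^ 2) (fun k => (/ 4) ^ k)).
    apply ex_series_geom. rewrite Rabs_pos_eq; lra.
Qed.

Lemma lamfix_bound : Rabs (lamfix om eps j sg - Vn om j) <= eps * (4 + 2 * Bc j).
Proof.
  rewrite (fix_eqL om eps j sg Hom He Hd Hs) at 1.
  apply (PhiL_bound om eps j sg (Bc j) wh (lamfix om eps j sg)); [lra|auto| |apply fix_inv; auto].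
  intros; split; [apply wh_pos|apply wh_le1].
Qed.

Lemma hfix_small x : Rabs (hfix om eps j sg x) <= 20 * eps / qq om * Bc j.
Proof.
  rewrite fix_eqH by auto.
  destruct (dl_props om eps j Hom He Hd) as (D1&_).
  eapply Rle_trans.
  { apply (PhiH_bound om eps j sg (Bc j) wh); auto.
    - pose proof (Bc_ge4 j); lra.
    - intros; split; [apply wh_pos|apply wh_le1].
    - intros; split; [apply wh_p1|apply wh_m1].
    - intros y. apply cen_wh; auto.
    - apply fix_inv; auto. }
  pose proof (wh_le1 x). pose proof (wh_pos x). pose proof (Bc_ge4 j). pose proof (qq_pos om Hom).
  assert (0 <= 20 * eps / qq om * Bc j) by (apply Rmult_le_pos; [apply Rmult_le_pos; [lra| left; apply Rinv_0_lt_compat; lra]|lra]).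
  nra.
Qed.

End Constr3.

Definition decay (f : Z -> R) : Prop :=
  forall eta, 0 < eta -> exists R : nat, forall x, (Z.of_nat R < Z.abs x)%Z -> Rabs (f x) < eta.

Lemma sq_lt_abs a e : 0 < e -> a ^ 2 < e ^ 2 -> Rabs a < e.
Proof.
  intros He H. destruct (Rlt_dec (Rabs a) e) as [|Hn]; auto.
  exfalso. rewrite <- (pow2_abs a) in H. assert (e <= Rabs a) by lra.
  assert (e ^ 2 <= Rabs a ^ 2) by (apply pow_incr; lra). lra.
Qed.

Lemma l2_decay f : l2Z f -> decay f.
Proof.
  intros Hl eta Heta. apply ex_series_lim_0 in Hl. apply is_lim_seq_spec in Hl.
  assert (He2 : 0 < eta ^ 2) by (apply pow_lt; lra).
  destruct (Hl (mkposreal _ He2)) as [N HN]. simpl in HN.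
  exists N. intros x Hx.
  assert (P2 : forall y, 0 <= f y ^ 2) by (intros; apply pow2_ge_0).
  destruct (Z_le_gt_dec 0 x) as [Hp|Hn].
  - specialize (HN (Z.to_nat x) ltac:(lia)). rewrite Z2Nat.id in HN by lia.
    rewrite Rminus_0_r in HN. rewrite Rabs_pos_eq in HN by (apply Rplus_le_le_0_compat; apply pow2_ge_0).
    apply sq_lt_abs; [auto|]. pose proof (P2 (- x - 1)%Z). lra.
  - specialize (HN (Z.to_nat (- x - 1)) ltac:(lia)).
    replace (- Z.of_nat (Z.to_nat (- x - 1)) - 1)%Z with x in HN by lia.
    rewrite Rminus_0_r in HN. rewrite Rabs_pos_eq in HN by (apply Rplus_le_le_0_compat; apply pow2_ge_0).
    apply sq_lt_abs; [auto|]. pose proof (P2 (Z.of_nat (Z.to_nat (- x - 1)))). lra.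
Qed.

Lemma finite_max (f : Z -> R) (R : nat) :
  exists xs, (Z.abs xs <= Z.of_nat R)%Z /\ forall x, (Z.abs x <= Z.of_nat R)%Z -> Rabs (f x) <= Rabs (f xs).
Proof.
  induction R as [|R [xs [H1 H2]]].
  - exists 0%Z. split; [lia|]. intros x Hx. replace x with 0%Z by lia. lra.
  - assert (Hall : forall x, (Z.abs x <= Z.of_nat (S R))%Z -> (Z.abs x <= Z.of_nat R)%Z \/ x = Z.of_nat (S R) \/ x = (- Z.of_nat (S R))%Z) by (intros; lia).
    assert (Ha : (Z.abs (Z.of_nat (S R)) <= Z.of_nat (S R))%Z /\ (Z.abs (- Z.of_nat (S R)) <= Z.of_nat (S R))%Z) by lia.
    assert (HS : forall y, Rabs (f xs) <= Rabs (f y) -> Rabs (f (Z.of_nat (S R))) <= Rabs (f y) ->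
       Rabs (f (- (Z.of_nat (S R)))%Z) <= Rabs (f y) -> (Z.abs y <= Z.of_nat (S R))%Z ->
       exists xs, (Z.abs xs <= Z.of_nat (S R))%Z /\ forall x, (Z.abs x <= Z.of_nat (S R))%Z -> Rabs (f x) <= Rabs (f xs)).
    { intros y A B C D. exists y. split; auto. intros x Hx.
      destruct (Hall x Hx) as [E|[E|E]]; rewrite ?E; auto. specialize (H2 x E). lra. }
    destruct (Rle_dec (Rabs (f (Z.of_nat (S R)))) (Rabs (f xs))); destruct (Rle_dec (Rabs (f (- (Z.of_nat (S R)))%Z)) (Rabs (f xs)));
    destruct (Rle_dec (Rabs (f (- (Z.of_nat (S R)))%Z)) (Rabs (f (Z.of_nat (S R))))).
    all: first [ apply (HS xs); try lra; lia | apply (HS (Z.of_nat (S R))); try lra; tauto | apply (HS (- (Z.of_nat (S R)))%Z); try lra; tauto ].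
Qed.

Lemma maxp om eps f lam : 0 < eps -> decay f -> (exists x0, f x0 <> 0) ->
  (forall x, Aop om eps f x = lam * f x) ->
  exists xs, (forall x, Rabs (f x) <= Rabs (f xs)) /\ f xs <> 0 /\
    vpot om xs <= lam <= vpot om xs + 4 * eps.
Proof.
  intros He Hdec [x0 Hx0] Heig.
  destruct (Hdec (Rabs (f x0)) (Rabs_pos_lt _ Hx0)) as [R HR].
  destruct (finite_max f R) as [xs [Hxs Hm]].
  assert (Hx0R : (Z.abs x0 <= Z.of_nat R)%Z).
  { destruct (Z_le_gt_dec (Z.abs x0) (Z.of_nat R)); auto. specialize (HR x0 ltac:(lia)). lra. }
  assert (Hglob : forall x, Rabs (f x) <= Rabs (f xs)).
  { intros x. destruct (Z_le_gt_dec (Z.abs x) (Z.of_nat R)); auto.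
    specialize (HR x ltac:(lia)). specialize (Hm x0 Hx0R). lra. }
  exists xs. split; auto.
  assert (Hnz : f xs <> 0).
  { intro E. specialize (Hglob x0). rewrite E, Rabs_R0 in Hglob. pose proof (Rabs_pos_lt _ Hx0). lra. }
  split; auto.
  specialize (Heig xs). unfold Aop, Lap in Heig.
  assert (E : (vpot om xs - lam + 2 * eps) * f xs = eps * (f (xs + 1)%Z + f (xs - 1)%Z)) by lra.
  assert (B : Rabs (vpot om xs - lam + 2 * eps) * Rabs (f xs) <= 2 * eps * Rabs (f xs)).
  { rewrite <- Rabs_mult, E, Rabs_mult, Rabs_pos_eq by lra.
    pose proof (Hglob (xs + 1)%Z). pose proof (Hglob (xs - 1)%Z).
    pose proof (Rabs_triang (f (xs + 1)%Z) (f (xs - 1)%Z)). nra. }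
  pose proof (Rabs_pos_lt _ Hnz).
  assert (Rabs (vpot om xs - lam + 2 * eps) <= 2 * eps).
  { apply (Rmult_le_reg_r (Rabs (f xs))); auto. }
  pose proof (Rle_abs (vpot om xs - lam + 2 * eps)). pose proof (Rle_abs (- (vpot om xs - lam + 2 * eps))). rewrite Rabs_Ropp in H2. lra.
Qed.

Lemma vpot_close om eps x j : 0 < om -> 4 * eps < qq om ->
  Rabs (vpot om x - Vn om j) <= 4 * eps -> Z.abs x = Z.of_nat j.
Proof.
  intros Hom He H.
  destruct (Z.eq_dec x (Z.of_nat j)); [lia|]. destruct (Z.eq_dec x (- Z.of_nat j)); [lia|].
  pose proof (vpot_gap om j x Hom n n0). lra.
Qed.

Lemma Aop_comb om eps f a b x :
  Aop om eps (fun y => a * f y + b * f (- y)%Z) x = a * Aop om eps f x + b * Aop om eps f (- x)%Z.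
Proof.
  unfold Aop, Lap. rewrite vpot_opp.
  replace (- (x + 1))%Z with (- x - 1)%Z by ring. replace (- (x - 1))%Z with (- x + 1)%Z by ring.
  ring.
Qed.

Lemma norm_fix om eps j sg lam u : 0 < om -> 0 < eps -> eps <= dl om j -> Rabs sg = 1 ->
  (j = 0%nat -> sg = 1) -> sg * sg = 1 ->
  (forall x, Aop om eps u x = lam * u x) -> (forall x, u (- x)%Z = sg * u x) ->
  u (Z.of_nat j) = 1 -> (forall x, Rabs (u x) <= 1) -> Rabs (lam - Vn om j) <= qq om / 2 ->
  forall x, u x = Ffix om eps j sg x.
Proof.
  intros Hom He Hd Hs Hj Hs2 Heig Hpar Hu1 Hub Hl.
  set (h := fun x => u x - cen j sg x).
  assert (Hcj : cen j sg (Z.of_nat j) = 1) by (unfold cen; destruct (Z.eq_dec _ _); [auto|lia]).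
  assert (Hcmj : cen j sg (- Z.of_nat j)%Z = sg) by (rewrite cen_par, Hcj by auto; ring).
  assert (HI : Inv om j (Bc j) (fun _ => 1) lam h).
  { split; auto. intros x. unfold h. pose proof (Hub x). pose proof (cen_le1 j sg x Hs).
    pose proof (Bc_ge4 j). pose proof (Rabs_triang (u x) (- cen j sg x)). rewrite Rabs_Ropp in H2.
    unfold Rminus. lra. }
  assert (HL : lam = PhiL om eps j sg h).
  { specialize (Heig (Z.of_nat j)). unfold Aop, Lap in Heig. rewrite Hu1 in Heig.
    unfold PhiL, h, Vn. lra. }
  assert (HH : forall x, h x = PhiH om eps j sg lam h x).
  { intros x. unfold PhiH. destruct (iscb j x) eqn:Ex.
    - apply iscb_true in Ex. unfold h. destruct Ex as [->| ->].
      + rewrite Hu1, Hcj. ring.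
      + rewrite Hpar, Hu1, Hcmj. ring.
    - destruct (iscb_false _ _ Ex) as [N1 N2].
      assert (Hc : cen j sg x = 0).
      { unfold cen. destruct (Z.eq_dec _ _); [lia|]. destruct (Z.eq_dec _ _); [lia|auto]. }
      destruct (dl_props om eps j Hom He Hd) as (D1&_).
      pose proof (den_bound om eps j lam x Hom He D1 Hl Ex) as Hden. pose proof (qq_pos om Hom).
      assert (Hnz : vpot om x - lam + 2 * eps <> 0) by (intro Z0; rewrite Z0, Rabs_R0 in Hden; lra).
      specialize (Heig x). unfold Aop, Lap in Heig. unfold h. rewrite Hc.
      set (V := vpot om x) in *. set (a := u (x + 1)%Z) in *. set (b := u (x - 1)%Z) in *.
      replace (cen j sg (x + 1)%Z + (a - cen j sg (x + 1)%Z) + (cen j sg (x - 1)%Z + (b - cen j sg (x - 1)%Z)))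
        with (a + b) by ring.
      apply (Rmult_eq_reg_r (V - lam + 2 * eps)); auto.
      unfold Rdiv. rewrite Rmult_assoc, Rinv_l by auto. lra. }
  destruct (fix_uniq om eps j sg Hom He Hd Hs lam h HI HL HH) as [_ E].
  intros x. specialize (E x). unfold h in E. unfold Ffix. lra.
Qed.

Lemma part_fix om eps j sg lam g : 0 < om -> 0 < eps -> eps <= dl om j -> Rabs sg = 1 -> sg * sg = 1 ->
  decay g -> (forall x, g (- x)%Z = sg * g x) -> (forall x, Aop om eps g x = lam * g x) ->
  Vn om j <= lam <= Vn om j + 4 * eps ->
  forall x, g x = g (Z.of_nat j) * Ffix om eps j sg x.
Proof.
  intros Hom He Hd Hs Hs2 Hdec Hpar Heig Hl.
  destruct (dl_props om eps j Hom He Hd) as (_&_&_&_&_&_&D7).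
  pose proof (qq_pos om Hom).
  destruct (classic (exists x0, g x0 <> 0)) as [Hex|Hno].
  2:{ assert (Z0 : forall x, g x = 0) by (intros x; apply NNPP; intro; apply Hno; eauto).
      intros x. rewrite !Z0. ring. }
  destruct (maxp om eps g lam He Hdec Hex Heig) as [xs [Hm [Hnz Hb]]].
  assert (Hxs : Z.abs xs = Z.of_nat j).
  { apply (vpot_close om eps); [auto|lra|]. apply Rabs_le; lra. }
  assert (Hgj : Rabs (g xs) = Rabs (g (Z.of_nat j))).
  { destruct (Z.abs_spec xs) as [[_ E]|[_ E]]; rewrite Hxs in E.
    - subst; auto.
    - replace xs with (- Z.of_nat j)%Z by lia. rewrite Hpar, Rabs_mult, Hs. ring. }
  assert (Hgjnz : g (Z.of_nat j) <> 0).
  { intro E. rewrite E, Rabs_R0 in Hgj. apply Hnz. apply Rabs_eq_0; auto. }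
  assert (Hsg : sg = 1 \/ sg = -1) by (destruct (Rle_dec 0 sg); [left|right]; nra).
  assert (Hj : j = 0%nat -> sg = 1).
  { intros ->. destruct Hsg as [|E]; auto. exfalso. apply Hgjnz.
    pose proof (Hpar 0%Z). simpl in H0. rewrite E in H0. simpl. lra. }
  set (c := g (Z.of_nat j)) in *.
  assert (Hu := norm_fix om eps j sg lam (fun x => g x / c) Hom He Hd Hs Hj Hs2).
  intros x. assert (E : g x / c = Ffix om eps j sg x).
  { apply Hu.
    - intros y. unfold Aop, Lap. pose proof (Heig y) as E. unfold Aop, Lap in E.
      unfold Rdiv. apply (Rmult_eq_reg_r c); auto.
      replace ((eps * (2 * (g y * / c) - g (y + 1)%Z * / c - g (y - 1)%Z * / c) + vpot om y * (g y * / c)) * c)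
        with (eps * (2 * g y - g (y + 1)%Z - g (y - 1)%Z) + vpot om y * g y) by (field; auto).
      rewrite E. field. auto.
    - intros y. rewrite Hpar. unfold Rdiv. ring.
    - unfold c. field. auto.
    - intros y. unfold Rdiv. rewrite Rabs_mult, Rabs_inv. rewrite <- Hgj.
      pose proof (Rabs_pos_lt _ Hnz). apply (Rmult_le_reg_r (Rabs (g xs))); auto.
      rewrite Rmult_assoc, Rinv_l by lra. specialize (Hm y). lra.
    - apply Rabs_le. lra. }
  rewrite <- E. field. auto.
Qed.

Lemma classify om eps j f lam : 0 < om -> 0 < eps -> eps <= dl om j -> decay f ->
  (forall x, Aop om eps f x = lam * f x) -> Vn om j <= lam <= Vn om j + 4 * eps ->
  forall x, f x = (f (Z.of_nat j) + f (- Z.of_nat j)%Z) / 2 * Ffix om eps j 1 x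
                + (f (Z.of_nat j) - f (- Z.of_nat j)%Z) / 2 * Ffix om eps j (-1) x.
Proof.
  intros Hom He Hd Hdec Heig Hl.
  assert (Hde : forall a b, decay (fun y => a * f y + b * f (- y)%Z)).
  { intros a b eta Heta.
    destruct (Hdec (eta / (Rabs a + Rabs b + 1))) as [R HR].
    { apply Rdiv_lt_0_compat; [lra|]. pose proof (Rabs_pos a). pose proof (Rabs_pos b). lra. }
    exists R. intros x Hx. pose proof (HR x Hx) as A1. pose proof (HR (- x)%Z ltac:(lia)) as A2.
    set (K := Rabs a + Rabs b + 1) in *.
    assert (0 < K) by (unfold K; pose proof (Rabs_pos a); pose proof (Rabs_pos b); lra).
    eapply Rle_lt_trans; [apply Rabs_triang|]. rewrite !Rabs_mult.
    assert (Rabs a * Rabs (f x) <= Rabs a * (eta / K)) by (apply Rmult_le_compat_l; [apply Rabs_pos|lra]).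
    assert (Rabs b * Rabs (f (- x)%Z) <= Rabs b * (eta / K)) by (apply Rmult_le_compat_l; [apply Rabs_pos|lra]).
    assert ((Rabs a + Rabs b) * (eta / K) < eta).
    { pose proof (Rabs_pos a). pose proof (Rabs_pos b).
      replace ((Rabs a + Rabs b) * (eta / K)) with (eta - eta / K) by (unfold K; field; lra).
      assert (0 < eta / K) by (apply Rdiv_lt_0_compat; lra). lra. }
    lra. }
  assert (He2 : forall a b x, Aop om eps (fun y => a * f y + b * f (- y)%Z) x =
       lam * (a * f x + b * f (- x)%Z)).
  { intros. rewrite Aop_comb, !Heig. ring. }
  assert (E1 := part_fix om eps j 1 lam (fun y => /2 * f y + /2 * f (- y)%Z) Hom He Hd
    ltac:(rewrite Rabs_R1; auto) ltac:(ring) (Hde _ _)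
    ltac:(intros; cbv beta; rewrite Z.opp_involutive; ring) (He2 _ _) Hl).
  assert (E2 := part_fix om eps j (-1) lam (fun y => /2 * f y + (- /2) * f (- y)%Z) Hom He Hd
    ltac:(unfold Rabs; destruct (Rcase_abs (-1)); lra) ltac:(ring) (Hde _ _)
    ltac:(intros; cbv beta; rewrite Z.opp_involutive; ring) (He2 _ _) Hl).
  intros x. specialize (E1 x). specialize (E2 x). simpl in E1, E2.
  replace ((f (Z.of_nat j) + f (- Z.of_nat j)%Z) / 2) with (/ 2 * f (Z.of_nat j) + / 2 * f (- Z.of_nat j)%Z) by field.
  replace ((f (Z.of_nat j) - f (- Z.of_nat j)%Z) / 2) with (/ 2 * f (Z.of_nat j) + - / 2 * f (- Z.of_nat j)%Z) by field.
  rewrite <- E1, <- E2. lra.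
Qed.

Definition jj (k : nat) : nat := Nat.div2 (S k).
Definition sgn (k : nat) : R := if Nat.even k then 1 else -1.
Definition GG (om eps : R) (k : nat) : Z -> R := Ffix om eps (jj k) (sgn k).
Definition LL (om eps : R) (k : nat) : R := lamfix om eps (jj k) (sgn k).

Lemma jj_spec k : (Nat.even k = true /\ k = 2 * jj k)%nat \/ (Nat.even k = false /\ k = 2 * jj k - 1 /\ 1 <= jj k)%nat.
Proof.
  unfold jj. pose proof (Nat.div2_odd (S k)) as H. rewrite Nat.odd_succ in H.
  destruct (Nat.even k) eqn:E; cbn [Nat.b2n] in H; [left|right]; lia.
Qed.

Lemma jj_le k n : (k <= 2 * n)%nat -> (jj k <= n)%nat.
Proof. intros. destruct (jj_spec k) as [[_ H1]|[_ [H1 H2]]]; lia. Qed.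

Lemma sgn_abs k : Rabs (sgn k) = 1.
Proof. unfold sgn. destruct (Nat.even k); [apply Rabs_R1|]. unfold Rabs; destruct (Rcase_abs (-1)); lra. Qed.
Lemma sgn_sq k : sgn k * sgn k = 1.
Proof. unfold sgn. destruct (Nat.even k); lra. Qed.
Lemma sgn_j0 k : jj k = 0%nat -> sgn k = 1.
Proof. intros H. unfold sgn. destruct (jj_spec k) as [[E _]|[E [_ H2]]]; [rewrite E; auto|lia]. Qed.

Lemma jj_inj k l : jj k = jj l -> sgn k = sgn l -> k = l.
Proof.
  intros H1 H2. unfold sgn in H2.
  destruct (jj_spec k) as [[Ek Hk]|[Ek [Hk _]]]; destruct (jj_spec l) as [[El Hl]|[El [Hl _]]];
  rewrite Ek, El in H2; try lra; lia.
Qed.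

Lemma jj_even j : jj (2 * j) = j /\ sgn (2 * j) = 1.
Proof.
  assert (E : Nat.even (2 * j) = true) by (rewrite Nat.even_mul; reflexivity).
  split.
  - destruct (jj_spec (2 * j)) as [[_ H]|[E2 _]]; [lia| congruence].
  - unfold sgn. rewrite E. reflexivity.
Qed.

Lemma jj_odd j : (1 <= j)%nat -> jj (2 * j - 1) = j /\ sgn (2 * j - 1) = -1.
Proof.
  intros Hj. destruct (jj_spec (2 * j - 1)) as [[E H]|[E [H _]]].
  - exfalso. replace (2 * j - 1)%nat with (S (2 * (j - 1))) in E by lia.
    rewrite Nat.even_succ, Nat.odd_mul in E. simpl in E. discriminate.
  - split; [lia|]. unfold sgn. rewrite E. reflexivity.
Qed.

Lemma dl_anti om j n : 0 < om -> (j <= n)%nat -> dl om n <= dl om j.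
Proof.
  intros Hom H. pose proof (Bc_mono j n H). pose proof (Bc_ge4 j). pose proof (qq_pos om Hom).
  assert (A : qq om / (8 + 4 * Bc n) <= qq om / (8 + 4 * Bc j)).
  { unfold Rdiv. apply Rmult_le_compat_l; [lra|]. apply Rinv_le_contravar; lra. }
  assert (Hq2 : 0 < qq om ^ 2) by (apply pow_lt; lra).
  assert (B : / (2 * (2 + 16 / qq om + 80 * Bc n / qq om ^ 2)) <= / (2 * (2 + 16 / qq om + 80 * Bc j / qq om ^ 2))).
  { assert (0 < 16 / qq om) by (apply Rdiv_lt_0_compat; lra).
    assert (0 < 80 * Bc j / qq om ^ 2) by (apply Rdiv_lt_0_compat; lra).
    assert (80 * Bc j / qq om ^ 2 <= 80 * Bc n / qq om ^ 2).
    { unfold Rdiv. apply Rmult_le_compat_r; [left; apply Rinv_0_lt_compat; lra| lra]. }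
    apply Rinv_le_contravar; lra. }
  unfold dl. unfold Rmin. destruct (Rle_dec _ _); destruct (Rle_dec _ _); lra.
Qed.

Lemma Vn_mono om j n : (j <= n)%nat -> Vn om j <= Vn om n.
Proof.
  intros H. unfold Vn, vpot. rewrite <- !INR_IZR_INZ.
  assert (INR j <= INR n) by (apply le_INR; auto). pose proof (pos_INR j).
  assert (INR j ^ 2 <= INR n ^ 2) by (apply pow_incr; lra).
  assert (0 <= om ^ 2) by apply pow2_ge_0.
  unfold Rdiv. apply Rmult_le_compat_r; [lra|]. apply Rmult_le_compat_l; auto.
Qed.

Definition TT (k : nat) (f : Z -> R) : R := (f (Z.of_nat (jj k)) + sgn k * f (- Z.of_nat (jj k))%Z) / 2.

Lemma TT_cen k l : TT k (cen (jj l) (sgn l)) = if Nat.eqb l k then 1 else 0.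
Proof.
  unfold TT, cen.
  destruct (Nat.eq_dec (jj k) (jj l)) as [E|E].
  - rewrite E. destruct (Z.eq_dec (Z.of_nat (jj l)) (Z.of_nat (jj l))) as [_|]; [|lia].
    destruct (Z.eq_dec (- Z.of_nat (jj l)) (Z.of_nat (jj l))) as [E2|E2].
    + assert (jj l = 0%nat) by lia. assert (jj k = 0%nat) by lia.
      assert (k = l) by (apply jj_inj; [lia| rewrite (sgn_j0 k), (sgn_j0 l); auto]). subst.
      rewrite Nat.eqb_refl. rewrite (sgn_j0 l) by auto. lra.
    + destruct (Z.eq_dec (- Z.of_nat (jj l)) (- Z.of_nat (jj l))) as [_|]; [|lia].
      destruct (Nat.eqb_spec l k) as [->|Hne].
      * pose proof (sgn_sq k). lra.
      * assert (sgn k <> sgn l) by (intro Es; apply Hne; symmetry; apply jj_inj; auto).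
        unfold sgn in *. destruct (Nat.even k), (Nat.even l); try lra; congruence.
  - destruct (Z.eq_dec (Z.of_nat (jj k)) (Z.of_nat (jj l))); [lia|].
    destruct (Z.eq_dec (Z.of_nat (jj k)) (- Z.of_nat (jj l))); [lia|].
    destruct (Z.eq_dec (- Z.of_nat (jj k)) (Z.of_nat (jj l))); [lia|].
    destruct (Z.eq_dec (- Z.of_nat (jj k)) (- Z.of_nat (jj l))); [lia|].
    destruct (Nat.eqb_spec l k); [subst; lia|]. lra.
Qed.

Lemma TT_sum k m (c : nat -> R) (F : nat -> Z -> R) :
  TT k (fun x => sum_f_R0 (fun l => c l * F l x) m) = sum_f_R0 (fun l => c l * TT k (F l)) m.
Proof.
  rewrite (sum_eq (fun l => c l * TT k (F l))
     (fun l => (c l * F l (Z.of_nat (jj k))) * / 2 + (c l * F l (- Z.of_nat (jj k))%Z) * (sgn k / 2)))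
    by (intros; unfold TT; field).
  rewrite sum_plus, <- !scal_sum. unfold TT. field.
Qed.

Lemma TT_abs k f th : (forall x, Rabs (f x) <= th) -> Rabs (TT k f) <= th.
Proof.
  intros H. unfold TT. unfold Rdiv. rewrite Rabs_mult, Rabs_inv, (Rabs_pos_eq 2) by lra.
  pose proof (Rabs_triang (f (Z.of_nat (jj k))) (sgn k * f (- Z.of_nat (jj k))%Z)).
  rewrite Rabs_mult, sgn_abs in H0. pose proof (H (Z.of_nat (jj k))). pose proof (H (- Z.of_nat (jj k))%Z).
  lra.
Qed.

Lemma sum_abs_nonneg (c : nat -> R) m : 0 <= sum_f_R0 (fun i => Rabs (c i)) m.
Proof. apply cond_pos_sum. intros; apply Rabs_pos. Qed.

Lemma indep om eps n m : 0 < om -> 0 < eps -> eps <= dl om n -> (m <= 2 * n)%nat ->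
  20 * eps / qq om * Bc n * INR (S m) <= / 2 -> lin_indep m (GG om eps).
Proof.
  intros Hom He Hd Hm Hth c Hc.
  set (th := 20 * eps / qq om * Bc n).
  assert (Hsm : forall l, (l <= m)%nat -> forall x, Rabs (hfix om eps (jj l) (sgn l) x) <= th).
  { intros l Hl x. pose proof (jj_le l n ltac:(lia)) as Hj.
    eapply Rle_trans; [apply hfix_small; auto using sgn_abs, sgn_j0, sgn_sq|].
    - eapply Rle_trans; [exact Hd| apply dl_anti; auto].
    - unfold th. apply Rmult_le_compat_l; [|apply Bc_mono; auto].
      pose proof (qq_pos om Hom). apply Rmult_le_pos; [lra| left; apply Rinv_0_lt_compat; lra]. }
  set (Ssum := sum_f_R0 (fun i => Rabs (c i)) m).
  assert (Hk : forall k, (k <= m)%nat -> Rabs (c k) <= th * Ssum).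
  { intros k Hkm.
    assert (E0 : TT k (fun x => sum_f_R0 (fun l => c l * GG om eps l x) m) = 0).
    { unfold TT. rewrite !Hc. lra. }
    rewrite TT_sum in E0.
    rewrite (sum_eq _ (fun l => (if Nat.eqb l k then c l else 0) + c l * TT k (hfix om eps (jj l) (sgn l)))) in E0.
    2:{ intros l Hl.
        assert (Et : TT k (GG om eps l) = TT k (cen (jj l) (sgn l)) + TT k (hfix om eps (jj l) (sgn l)))
          by (unfold TT, GG, Ffix; field).
        rewrite Et, TT_cen. destruct (Nat.eqb l k); ring. }
    rewrite sum_plus, sum_delta in E0 by auto.
    assert (E1 : c k = - sum_f_R0 (fun l => c l * TT k (hfix om eps (jj l) (sgn l))) m) by lra.
    rewrite E1, Rabs_Ropp. eapply Rle_trans; [apply sum_f_R0_triangle|].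
    unfold Ssum. rewrite scal_sum. apply sum_Rle. intros l Hl. rewrite Rabs_mult.
    apply Rmult_le_compat_l; [apply Rabs_pos|]. apply TT_abs. apply Hsm; auto. }
  assert (HS : Ssum <= th * Ssum * INR (S m)).
  { unfold Ssum at 1. eapply Rle_trans. { apply sum_Rle. intros k Hkm. apply (Hk k Hkm). }
    rewrite sum_cte. lra. }
  assert (HS0 : 0 <= Ssum) by apply sum_abs_nonneg.
  assert (HS1 : Ssum = 0).
  { fold th in Hth. assert (th * Ssum * INR (S m) = (th * INR (S m)) * Ssum) by ring. nra. }
  intros i Hi. specialize (Hk i Hi). rewrite HS1, Rmult_0_r in Hk.
  pose proof (Rabs_pos (c i)). apply Rabs_eq_0. lra.
Qed.

Definition Eset (om gam : R) (N m : nat) : R -> Prop :=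
  fun lam => exists (F : nat -> Z -> R) (mu : nat -> R),
     lin_indep m F /\
     forall i, (i <= m)%nat -> is_eigvec om gam N (mu i) (F i) /\ mu i <= lam.

Lemma Eig_eq om gam N m : Eig om gam N m = real (Glb_Rbar (Eset om gam N m)).
Proof. reflexivity. Qed.

Lemma glb_bounds (E : R -> Prop) (L U : R) : E U -> (forall x, E x -> L <= x) ->
  L <= real (Glb_Rbar E) <= U.
Proof.
  intros HU HL. destruct (Glb_Rbar_correct E) as [Hlb Hgr].
  pose proof (Hlb U HU) as A. assert (B : Rbar_le L (Glb_Rbar E)) by (apply Hgr; intros x Hx; apply HL; auto).
  destruct (Glb_Rbar E) as [g| |]; simpl in *; try contradiction. split; auto.
Qed.

Definition sN (gam : R) (N : nat) : R := Rpower (INR N) (-2 * gam).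
Definition eN (gam : R) (N : nat) : R := INR N ^ 2 / 2 / sN gam N.

Lemma sN_pos gam N : 0 < sN gam N.
Proof. unfold sN, Rpower. apply exp_pos. Qed.

Lemma HN_scale om gam N f x : HN om gam N f x = sN gam N * Aop om (eN gam N) f x.
Proof.
  pose proof (sN_pos gam N). unfold HN, Aop, eN, sN in *. field. lra.
Qed.

Lemma eig_to om gam N mu f : is_eigvec om gam N mu f ->
  l2Z f /\ (exists x, f x <> 0) /\ forall x, Aop om (eN gam N) f x = (mu / sN gam N) * f x.
Proof.
  intros [H1 [H2 H3]]. split; auto. split; auto. intros x. specialize (H3 x).
  rewrite HN_scale in H3. pose proof (sN_pos gam N).
  apply (Rmult_eq_reg_l (sN gam N)); [|lra]. rewrite H3. field. lra.
Qed.

Lemma sum_two (a b : R) p p' K (g : nat -> R) : (p <= K)%nat -> (p' <= K)%nat ->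
  sum_f_R0 (fun k => ((if Nat.eqb k p then a else 0) + (if Nat.eqb k p' then b else 0)) * g k) K
   = a * g p + b * g p'.
Proof.
  intros H1 H2.
  rewrite (sum_eq _ (fun k => (if Nat.eqb k p then a * g k else 0) + (if Nat.eqb k p' then b * g k else 0)))
    by (intros; destruct (Nat.eqb i p), (Nat.eqb i p'); ring).
  rewrite sum_plus. rewrite (sum_delta (fun k => a * g k)) by auto.
  rewrite (sum_delta (fun k => b * g k)) by auto. reflexivity.
Qed.

Lemma lower om gam N n m : 0 < om -> 0 < eN gam N -> eN gam N <= dl om n -> (1 <= n)%nat ->
  (2 * n - 1 <= m)%nat -> forall L, Eset om gam N m L -> sN gam N * Vn om n <= L.
Proof.
  intros Hom He Hd Hn Hm L [F [mu [Hind Hall]]].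
  destruct (Rle_dec (sN gam N * Vn om n) L) as [|HL]; auto. exfalso.
  pose proof (sN_pos gam N) as Hs.
  set (eps := eN gam N) in *.
  set (K := (2 * n - 2)%nat).
  assert (Hcl : forall i, exists r : nat -> R, (i <= m)%nat ->
     forall x, F i x = sum_f_R0 (fun k => r k * GG om eps k x) K).
  { intros i. destruct (le_lt_dec i m) as [Him|Him]; [|exists (fun _ => 0); intros; lia].
    destruct (Hall i Him) as [Hev Hmu].
    destruct (eig_to om gam N (mu i) (F i) Hev) as [Hl2 [Hnz Heig]]. fold eps in Heig.
    set (lam := mu i / sN gam N) in *.
    assert (Hlam : lam < Vn om n).
    { unfold lam. apply (Rmult_lt_reg_l (sN gam N)); auto.
      replace (sN gam N * (mu i / sN gam N)) with (mu i) by (field; lra). lra. }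
    destruct (maxp om eps (F i) lam He (l2_decay _ Hl2) Hnz Heig) as [xs [_ [_ [Hb1 Hb2]]]].
    assert (Hxs : (Z.abs xs < Z.of_nat n)%Z) by (apply (vpot_lt om); auto; lra).
    set (j := Z.abs_nat xs).
    assert (Hj : (j < n)%nat) by (unfold j; lia).
    assert (HV : Vn om j = vpot om xs) by (unfold Vn, j; rewrite Nat2Z.inj_abs_nat, vpot_abs; auto).
    assert (Hdj : eps <= dl om j) by (eapply Rle_trans; [exact Hd| apply dl_anti; auto; lia]).
    pose proof (classify om eps j (F i) lam Hom He Hdj (l2_decay _ Hl2) Heig ltac:(rewrite HV; lra)) as Hc.
    set (a := (F i (Z.of_nat j) + F i (- Z.of_nat j)%Z) / 2) in *.
    set (b := (F i (Z.of_nat j) - F i (- Z.of_nat j)%Z) / 2) in *.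
    exists (fun k => (if Nat.eqb k (2 * j) then a else 0) + (if Nat.eqb k (2 * j - 1) then b else 0)).
    intros _ x. rewrite (sum_two a b (2 * j) (2 * j - 1) K (fun k => GG om eps k x)) by (unfold K; lia).
    rewrite Hc. unfold GG. destruct (jj_even j) as [E1 E2]. rewrite E1, E2.
    destruct (Nat.eq_dec j 0) as [Hj0|Hj0].
    - assert (b = 0) by (unfold b; rewrite Hj0; simpl; lra). rewrite H. ring.
    - destruct (jj_odd j ltac:(lia)) as [E3 E4]. rewrite E3, E4. reflexivity. }
  set (a := fun i => proj1_sig (constructive_indefinite_description _ (Hcl i))).
  assert (Ha : forall i, (i <= m)%nat -> forall x, F i x = sum_f_R0 (fun k => a i k * GG om eps k x) K).
  { intros i. unfold a. destruct (constructive_indefinite_description _ (Hcl i)). simpl. auto. }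
  destruct (lin_alg m (seq 0 (S K)) a ltac:(rewrite length_seq; unfold K; lia)) as [c [[i0 [Hi0 Hci0]] Hc]].
  apply Hci0. apply (Hind c); auto.
  intros x.
  rewrite (sum_eq _ (fun i => sum_f_R0 (fun k => c i * a i k * GG om eps k x) K)).
  2:{ intros i Hi. rewrite (Ha i Hi x). rewrite scal_sum. apply sum_eq. intros; ring. }
  rewrite sum_swap. apply sum_zero. intros k Hk.
  rewrite <- (scal_sum (fun i => c i * a i k) m (GG om eps k x)).
  rewrite (Hc k) by (apply in_seq; lia). ring.
Qed.

Lemma lower0 om gam N m : 0 < om -> 0 < eN gam N -> forall L, Eset om gam N m L -> 0 <= L.
Proof.
  intros Hom He L [F [mu [_ Hall]]].
  destruct (Hall 0%nat ltac:(lia)) as [Hev Hmu].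
  destruct (eig_to om gam N (mu 0%nat) (F 0%nat) Hev) as [Hl2 [Hnz Heig]].
  destruct (maxp om (eN gam N) (F 0%nat) _ He (l2_decay _ Hl2) Hnz Heig) as [xs [_ [_ [Hb1 _]]]].
  pose proof (vpot_nonneg om xs). pose proof (sN_pos gam N).
  assert (0 <= mu 0%nat / sN gam N) by lra.
  assert (0 <= mu 0%nat).
  { replace (mu 0%nat) with (sN gam N * (mu 0%nat / sN gam N)) by (field; lra). nra. }
  lra.
Qed.

Definition dA (om : R) (n : nat) : R := Rmin (dl om n) (qq om / (40 * INR (S (2 * n)) * Bc n)).

Lemma upper om gam N n m : 0 < om -> 0 < eN gam N -> eN gam N <= dA om n -> (m <= 2 * n)%nat ->
  Eset om gam N m (sN gam N * (Vn om n + eN gam N * (4 + 2 * Bc n))).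
Proof.
  intros Hom He Hd Hm.
  set (eps := eN gam N) in *.
  assert (Hdl : eps <= dl om n) by (eapply Rle_trans; [exact Hd| apply Rmin_l]).
  pose proof (sN_pos gam N) as Hs. pose proof (qq_pos om Hom) as Hq. pose proof (Bc_ge4 n) as HB.
  exists (GG om eps), (fun k => sN gam N * LL om eps k). split.
  - apply (indep om eps n m Hom He Hdl Hm).
    assert (eps <= qq om / (40 * INR (S (2 * n)) * Bc n)) by (eapply Rle_trans; [exact Hd| apply Rmin_r]).
    assert (Hm1 : INR (S m) <= INR (S (2 * n))) by (apply le_INR; lia).
    pose proof (pos_INR (S m)).
    assert (Hpos : 0 < INR (S (2 * n))) by (apply lt_0_INR; lia).
    apply (Rmult_le_compat_r (40 * INR (S (2 * n)) * Bc n)) in H; [|nra].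
    replace (qq om / (40 * INR (S (2 * n)) * Bc n) * (40 * INR (S (2 * n)) * Bc n)) with (qq om) in H
      by (field; lra).
    replace (20 * eps / qq om * Bc n * INR (S m)) with ((20 * eps * Bc n * INR (S m)) / qq om) by (field; lra).
    apply (Rmult_le_reg_r (qq om)); [lra|]. unfold Rdiv. rewrite Rmult_assoc, Rinv_l, Rmult_1_r by lra.
    nra.
  - intros i Hi. pose proof (jj_le i n ltac:(lia)) as Hj.
    assert (Hdj : eps <= dl om (jj i)) by (eapply Rle_trans; [exact Hdl| apply dl_anti; auto]).
    split.
    + split; [apply (Ffix_l2 om eps (jj i) (sgn i) Hom He Hdj (sgn_abs i) (sgn_j0 i))|]. split.
      * exists (Z.of_nat (jj i)). unfold GG.
        rewrite (Ffix_j om eps (jj i) (sgn i) Hom He Hdj (sgn_abs i) (sgn_j0 i)). lra.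
      * intros x. rewrite HN_scale. fold eps. unfold GG, LL.
        rewrite (Ffix_eig om eps (jj i) (sgn i) Hom He Hdj (sgn_abs i) (sgn_j0 i) (sgn_sq i)). ring.
    + apply Rmult_le_compat_l; [lra|].
      pose proof (lamfix_bound om eps (jj i) (sgn i) Hom He Hdj (sgn_abs i)) as Hb.
      apply Rabs_le_between in Hb.
      pose proof (Vn_mono om (jj i) n Hj). pose proof (Bc_mono (jj i) n Hj). unfold LL. nra.
Qed.

Lemma nat_above (r : R) : exists N0 : nat, (1 <= N0)%nat /\ r < INR N0.
Proof.
  destruct (archimed (Rmax r 1)) as [H1 _].
  pose proof (Rmax_l r 1). pose proof (Rmax_r r 1).
  assert (Hp : (0 < up (Rmax r 1))%Z) by (apply lt_IZR; lra).
  exists (Z.to_nat (up (Rmax r 1))). split; [lia|].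
  rewrite INR_IZR_INZ, Z2Nat.id by lia. lra.
Qed.

Lemma Rpower_2 x : 0 < x -> Rpower x 2 = x ^ 2.
Proof. intros. rewrite <- Rpower_pow by auto. f_equal. Qed.

Lemma eN_small gam : gam < -1 -> forall eta, 0 < eta ->
  exists N0, forall N, (N0 <= N)%nat -> 0 < eN gam N <= eta.
Proof.
  intros Hg eta Heta.
  set (p := -2 * gam).
  set (T := / (2 * eta * (p - 2))).
  assert (Hp : 0 < p - 2) by (unfold p; lra).
  destruct (nat_above (exp T)) as [N0 [H1 H2]].
  exists N0. intros N HN.
  assert (HNp : INR N0 <= INR N) by (apply le_INR; auto).
  assert (Hpos : 0 < INR N) by (pose proof (exp_pos T); lra).
  pose proof (sN_pos gam N) as Hs.
  assert (E : eN gam N = / (2 * Rpower (INR N) (p - 2))).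
  { unfold eN, sN. fold p. replace p with (2 + (p - 2)) at 1 by ring.
    rewrite Rpower_plus, Rpower_2 by auto.
    assert (0 < Rpower (INR N) (p - 2)) by (unfold Rpower; apply exp_pos).
    assert (0 < INR N ^ 2) by (apply pow_lt; auto).
    field. split; lra. }
  assert (HR : 0 < Rpower (INR N) (p - 2)) by (unfold Rpower; apply exp_pos).
  rewrite E. split; [apply Rinv_0_lt_compat; lra|].
  assert (Hln : T <= ln (INR N)).
  { rewrite <- (ln_exp T). apply ln_le; [apply exp_pos| lra]. }
  assert (HRb : (p - 2) * T <= Rpower (INR N) (p - 2)).
  { unfold Rpower. pose proof (exp_ineq1_le ((p - 2) * ln (INR N))).
    assert ((p - 2) * T <= (p - 2) * ln (INR N)) by (apply Rmult_le_compat_l; lra). lra. }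
  assert (HpT : (p - 2) * T = / (2 * eta)) by (unfold T; field; lra).
  rewrite HpT in HRb.
  replace eta with (/ (2 * / (2 * eta))) by (field; lra).
  apply Rinv_le_contravar.
  - assert (0 < / (2 * eta)) by (apply Rinv_0_lt_compat; lra). lra.
  - lra.
Qed.

Lemma main_lim om gam n m : 0 < om -> gam < -1 ->
  ((n = 0 /\ m = 0) \/ (1 <= n /\ 2 * n - 1 <= m <= 2 * n))%nat ->
  is_lim_seq (fun N : nat => Eig om gam N m / Rpower (INR N) (2 * Rabs gam)) (Vn om n).
Proof.
  intros Hom Hg Hnm. apply is_lim_seq_spec. intros eps.
  set (C := 4 + 2 * Bc n).
  assert (HC : 0 < C) by (unfold C; pose proof (Bc_ge4 n); lra).
  assert (HdA : 0 < dA om n).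
  { unfold dA, dl. pose proof (qq_pos om Hom). pose proof (Bc_ge4 n).
    assert (0 < INR (S (2 * n))) by (apply lt_0_INR; lia).
    assert (0 < 16 / qq om) by (apply Rdiv_lt_0_compat; lra).
    assert (0 < 80 * Bc n / qq om ^ 2) by (apply Rdiv_lt_0_compat; [lra| apply pow_lt; lra]).
    repeat apply Rmin_pos.
    - apply Rdiv_lt_0_compat; lra.
    - apply Rinv_0_lt_compat; lra.
    - apply Rdiv_lt_0_compat; [lra|]. apply Rmult_lt_0_compat; [|lra]. lra. }
  assert (Heta : 0 < Rmin (dA om n) (eps / (2 * C))).
  { apply Rmin_pos; auto. apply Rdiv_lt_0_compat; [apply cond_pos| lra]. }
  destruct (eN_small gam Hg _ Heta) as [N0 HN0].
  exists N0. intros N HN. destruct (HN0 N HN) as [He He2].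
  assert (Hd : eN gam N <= dA om n) by (eapply Rle_trans; [exact He2| apply Rmin_l]).
  assert (He3 : eN gam N <= eps / (2 * C)) by (eapply Rle_trans; [exact He2| apply Rmin_r]).
  assert (Hdl : eN gam N <= dl om n) by (eapply Rle_trans; [exact Hd| apply Rmin_l]).
  assert (Hs : Rpower (INR N) (2 * Rabs gam) = sN gam N).
  { unfold sN. f_equal. rewrite Rabs_left by lra. ring. }
  rewrite Hs. pose proof (sN_pos gam N) as Hsp.
  assert (Hm : (m <= 2 * n)%nat) by lia.
  pose proof (upper om gam N n m Hom He Hd Hm) as HU.
  assert (HL : forall x, Eset om gam N m x -> sN gam N * Vn om n <= x).
  { destruct Hnm as [[-> ->]|[H1 [H2 H3]]].
    - intros x Hx. assert (V0 : Vn om 0 = 0) by (unfold Vn, vpot; simpl; field).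
      rewrite V0, Rmult_0_r. exact (lower0 om gam N 0 Hom He x Hx).
    - apply (lower om gam N n m Hom He Hdl H1 H2). }
  destruct (glb_bounds _ _ _ HU HL) as [B1 B2].
  rewrite Eig_eq.
  set (g := real (Glb_Rbar (Eset om gam N m))) in *.
  assert (A1 : Vn om n <= g / sN gam N).
  { apply (Rmult_le_reg_l (sN gam N)); auto. replace (sN gam N * (g / sN gam N)) with g by (field; lra). lra. }
  assert (A2 : g / sN gam N <= Vn om n + eN gam N * C).
  { apply (Rmult_le_reg_l (sN gam N)); auto. replace (sN gam N * (g / sN gam N)) with g by (field; lra). unfold C. lra. }
  assert (A3 : eN gam N * C <= eps / 2).
  { apply (Rmult_le_compat_r C) in He3; [|lra]. replace (eps / (2 * C) * C) with (eps / 2) in He3 by (field; lra). lra. }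
  pose proof (cond_pos eps).
  rewrite Rabs_pos_eq by lra. lra.
Qed.

Theorem proposition4p2 (om gam : R) (hom : 0 < om) (hgam : gam < -1) :
  is_lim_seq (fun N : nat => Eig om gam N 0 / Rpower (INR N) (2 * Rabs gam)) 0 /\
  forall n : nat, (1 <= n)%nat ->
    is_lim_seq (fun N : nat => Eig om gam N (2 * n) / Rpower (INR N) (2 * Rabs gam))
      (om^2 * (INR n)^2 / 2) /\
    is_lim_seq (fun N : nat => Eig om gam N (2 * n - 1) / Rpower (INR N) (2 * Rabs gam))
      (om^2 * (INR n)^2 / 2).
Proof.
  split.
  - assert (V0 : Vn om 0 = 0) by (unfold Vn, vpot; simpl; field).
    pose proof (main_lim om gam 0 0 hom hgam ltac:(lia)) as H. rewrite V0 in H. exact H.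
  - intros n Hn. replace (om ^ 2 * INR n ^ 2 / 2) with (Vn om n) by (unfold Vn, vpot; rewrite INR_IZR_INZ; reflexivity).
    split; apply main_lim; auto; right; lia.
Qed.
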